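(* Let $\alpha<\beta$ and let $S=S(\alpha,\beta;\infty)=\{z\in\mathbb{C}:z\ne0,\ \alpha<\arg z<\beta\}$. Let $f$ be holomorphic in $S$ and continuous on $\overline{S}$, and suppose there are $M,C,\lambda>0$ with $|f(z)|\le M$ for every $z\in S$ and $|f(z)|\le C/|z|^{\lambda}$ for every $z\neq 0$ with $\arg z=\alpha$. Then for every $z\in\overline{S}\setminus\{0\}$, $$|f(z)|\le K\Big(\frac{C}{|z|^{\lambda}}\Big)^{\frac{\beta-\theta}{\beta-\alpha}},$$ where $\theta=\arg z\in[\alpha,\beta]$ and $K=\max\{1,M\}$. *)

(* Defs.v *)
From Stdlib Require Import Reals.
From Coquelicot Require Import Coquelicot.
Open Scope R_scope.

Definition has_arg (z : C) (theta : R) : Prop :=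
  z = (Cmod z * cos theta, Cmod z * sin theta)%R.

Definition sector (alpha beta : R) (z : C) : Prop :=
  z <> 0%C /\ exists theta, alpha < theta < beta /\ has_arg z theta.

Definition sector_closure (alpha beta : R) (z : C) : Prop :=
  z = 0%C \/ exists theta, alpha <= theta <= beta /\ has_arg z theta.

Definition holo_at (f : C -> C) (z : C) : Prop :=
  @ex_derive C_AbsRing C_NormedModule f z.

Definition cont_on_at (D : C -> Prop) (f : C -> C) (z : C) : Prop :=
  filterlim f (within D (locally z)) (locally (f z)).

(* Main.v *)
Require Import Defs.
From Stdlib Require Import Reals Lra Lia Psatz ZArith IndefiniteDescription Classical.
From Coquelicot Require Import Coquelicot.
Open Scope R_scope.

Notation CR := C_R_CompleteNormedModule.
Definition CI (f : R -> C) (a b : R) : C := @RInt CR f a b.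
Definition cex (f : R -> C) a b := @ex_RInt CR f a b.

Lemma is_RInt_C_fst (f : R -> C) a b l :
  @is_RInt CR f a b l -> is_RInt (fun t => fst (f t)) a b (fst l).
Proof. intros H. exact (@is_RInt_fct_extend_fst R_NormedModule R_NormedModule f a b l H). Qed.
Lemma is_RInt_C_snd (f : R -> C) a b l :
  @is_RInt CR f a b l -> is_RInt (fun t => snd (f t)) a b (snd l).
Proof. intros H. exact (@is_RInt_fct_extend_snd R_NormedModule R_NormedModule f a b l H). Qed.
Lemma is_RInt_C_pair (f : R -> C) a b l1 l2 :
  is_RInt (fun t => fst (f t)) a b l1 -> is_RInt (fun t => snd (f t)) a b l2 ->
  @is_RInt CR f a b (l1,l2).
Proof. intros H1 H2. exact (@is_RInt_fct_extend_pair R_NormedModule R_NormedModule f a b l1 l2 H1 H2). Qed.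

Lemma CI_correct f a b : cex f a b -> @is_RInt CR f a b (CI f a b).
Proof. intros H. unfold CI. apply (@RInt_correct CR). exact H. Qed.

Lemma CI_unique f a b l : @is_RInt CR f a b l -> CI f a b = l.
Proof. intros H. unfold CI. exact (@is_RInt_unique CR f a b l H). Qed.

Lemma norm_CR (z : C) : @norm R_AbsRing (@CompleteNormedModule.NormedModule R_AbsRing CR) z = Cmod z.
Proof.
  destruct z as [x y]. unfold norm. simpl. unfold prod_norm. simpl. unfold Cmod. simpl.
  unfold abs; simpl. f_equal. change (Rabs x * (Rabs x * 1) + Rabs y * (Rabs y * 1) = x * (x * 1) + y * (y * 1)).
  rewrite !Rmult_1_r. rewrite <- !Rabs_mult. rewrite !(Rabs_right (_ * _)) by nra. reflexivity.
Qed.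

Lemma is_RInt_Cplus f g a b l m : @is_RInt CR f a b l -> @is_RInt CR g a b m ->
  @is_RInt CR (fun t => Cplus (f t) (g t)) a b (Cplus l m).
Proof.
  intros Hf Hg. destruct l as [l1 l2], m as [m1 m2].
  apply is_RInt_C_pair; simpl.
  - apply (is_RInt_plus (V:=R_CompleteNormedModule)); [exact (is_RInt_C_fst _ _ _ _ Hf)| exact (is_RInt_C_fst _ _ _ _ Hg)].
  - apply (is_RInt_plus (V:=R_CompleteNormedModule)); [exact (is_RInt_C_snd _ _ _ _ Hf)| exact (is_RInt_C_snd _ _ _ _ Hg)].
Qed.

Lemma is_RInt_Cmult f a b l c : @is_RInt CR f a b l ->
  @is_RInt CR (fun t => Cmult c (f t)) a b (Cmult c l).
Proof.
  intros Hf. destruct l as [l1 l2], c as [c1 c2].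
  pose proof (is_RInt_C_fst _ _ _ _ Hf) as H1. pose proof (is_RInt_C_snd _ _ _ _ Hf) as H2.
  simpl in H1, H2.
  apply is_RInt_C_pair; simpl.
  - apply (is_RInt_minus (V:=R_CompleteNormedModule));
    apply (is_RInt_scal (V:=R_CompleteNormedModule)); assumption.
  - apply (is_RInt_plus (V:=R_CompleteNormedModule));
    apply (is_RInt_scal (V:=R_CompleteNormedModule)); assumption.
Qed.

Lemma is_RInt_Copp f a b l : @is_RInt CR f a b l ->
  @is_RInt CR (fun t => Copp (f t)) a b (Copp l).
Proof.
  intros Hf. destruct l as [l1 l2].
  pose proof (is_RInt_C_fst _ _ _ _ Hf) as H1. pose proof (is_RInt_C_snd _ _ _ _ Hf) as H2.
  simpl in H1, H2.
  apply is_RInt_C_pair; simpl; apply (is_RInt_opp (V:=R_CompleteNormedModule)); assumption.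
Qed.

Lemma cex_ex f a b : cex f a b -> exists l, @is_RInt CR f a b l.
Proof. intros [l H]. exists l. exact H. Qed.

Lemma CI_plus f g a b : cex f a b -> cex g a b ->
  CI (fun t => Cplus (f t) (g t)) a b = Cplus (CI f a b) (CI g a b).
Proof. intros Hf Hg. apply CI_unique, is_RInt_Cplus; apply CI_correct; assumption. Qed.

Lemma CI_mult f a b c : cex f a b -> CI (fun t => Cmult c (f t)) a b = Cmult c (CI f a b).
Proof. intros Hf. apply CI_unique, is_RInt_Cmult; apply CI_correct; assumption. Qed.

Lemma cex_plus f g a b : cex f a b -> cex g a b -> cex (fun t => Cplus (f t) (g t)) a b.
Proof. intros Hf Hg. eexists. apply is_RInt_Cplus; apply CI_correct; eassumption. Qed.

Lemma cex_mult f a b c : cex f a b -> cex (fun t => Cmult c (f t)) a b.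
Proof. intros Hf. eexists. apply is_RInt_Cmult; apply CI_correct; eassumption. Qed.

Lemma cex_opp f a b : cex f a b -> cex (fun t => Copp (f t)) a b.
Proof. intros Hf. eexists. apply is_RInt_Copp; apply CI_correct; eassumption. Qed.

Lemma CI_ext f g a b : (forall t, Rmin a b <= t <= Rmax a b -> f t = g t) -> CI f a b = CI g a b.
Proof. intros H. unfold CI. apply (@RInt_ext CR). intros t Ht. apply H. lra. Qed.

Lemma cex_ext f g a b : (forall t, Rmin a b <= t <= Rmax a b -> f t = g t) -> cex f a b -> cex g a b.
Proof. intros H [l Hl]. exists l. apply (@is_RInt_ext CR f). intros t Ht; apply H; lra. exact Hl. Qed.

Lemma cex_cont (f : R -> C) a b :
  (forall t, Rmin a b <= t <= Rmax a b -> @continuous R_UniformSpace C_UniformSpace f t) -> cex f a b.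
Proof. intros H. apply (@ex_RInt_continuous CR). exact H. Qed.

Lemma CI_bound f a b B : a <= b -> cex f a b -> (forall t, a <= t <= b -> Cmod (f t) <= B) ->
  Cmod (CI f a b) <= (b - a) * B.
Proof.
  intros Hab Hf HB. rewrite <- norm_CR.
  apply (@norm_RInt_le_const CR f a b). exact Hab.
  intros t Ht. rewrite norm_CR. apply HB; exact Ht.
  apply CI_correct; exact Hf.
Qed.

Lemma CI_chasles f a b c : cex f a b -> cex f b c -> Cplus (CI f a b) (CI f b c) = CI f a c.
Proof. intros H1 H2. unfold CI. exact (@RInt_Chasles CR f a b c H1 H2). Qed.

Lemma CI_const (c : C) a b : CI (fun _ => c) a b = Cmult (RtoC (b - a)) c.
Proof.
  apply CI_unique. destruct c as [c1 c2]. apply is_RInt_C_pair; simpl.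
  - replace ((b - a) * c1 - 0 * c2) with (scal (b - a) c1).
    apply (is_RInt_const (V:=R_CompleteNormedModule)). unfold scal; simpl; unfold mult; simpl; ring.
  - replace ((b - a) * c2 + 0 * c1) with (scal (b - a) c2).
    apply (is_RInt_const (V:=R_CompleteNormedModule)). unfold scal; simpl; unfold mult; simpl; ring.
Qed.

Definition ccont (G : C -> C) (z : C) := @continuous C_UniformSpace C_UniformSpace G z.

Lemma locally_C_intro (z : C) (P : C -> Prop) :
  (exists eps : posreal, forall w : C, Rabs (fst w - fst z) < eps -> Rabs (snd w - snd z) < eps -> P w) ->
  @locally C_UniformSpace z P.
Proof.
  intros [eps H]. exists eps. intros w [H1 H2]. apply H; assumption.
Qed.

Lemma locally_C_elim (z : C) (P : C -> Prop) : @locally C_UniformSpace z P ->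
  exists eps : posreal, forall w : C, Rabs (fst w - fst z) < eps -> Rabs (snd w - snd z) < eps -> P w.
Proof.
  intros [eps H]. exists eps. intros w H1 H2. apply H. split; assumption.
Qed.

Lemma ex_derive_ccont G z : @ex_derive C_AbsRing C_NormedModule G z -> ccont G z.
Proof.
  intros H. apply ex_derive_continuous in H.
  intros P HP. apply locally_C. apply H. exact HP.
Qed.

Lemma cont_pair_l (y t : R) : @continuous R_UniformSpace C_UniformSpace (fun s => (s, y)) t.
Proof.
  intros P HP. apply locally_C_elim in HP. destruct HP as [eps H].
  exists eps. intros s Hs. apply H; simpl. exact Hs. rewrite Rminus_eq_0, Rabs_R0. apply cond_pos.
Qed.

Lemma cont_pair_r (x t : R) : @continuous R_UniformSpace C_UniformSpace (fun s => (x, s)) t.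
Proof.
  intros P HP. apply locally_C_elim in HP. destruct HP as [eps H].
  exists eps. intros s Hs. apply H; simpl. rewrite Rminus_eq_0, Rabs_R0. apply cond_pos. exact Hs.
Qed.

Lemma ccont_h G x y : ccont G (x,y) -> @continuous R_UniformSpace C_UniformSpace (fun s => G (s,y)) x.
Proof. intros H. apply (continuous_comp (fun s => (s,y)) G). apply cont_pair_l. exact H. Qed.

Lemma ccont_v G x y : ccont G (x,y) -> @continuous R_UniformSpace C_UniformSpace (fun s => G (x,s)) y.
Proof. intros H. apply (continuous_comp (fun s => (x,s)) G). apply cont_pair_r. exact H. Qed.

Definition hI (G : C -> C) y x1 x2 := CI (fun x => G (x,y)) x1 x2.
Definition vI (G : C -> C) x y1 y2 := CI (fun y => G (x,y)) y1 y2.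

Definition bd (G : C -> C) x1 x2 y1 y2 : C :=
  (hI G y1 x1 x2 + Ci * vI G x2 y1 y2 - hI G y2 x1 x2 - Ci * vI G x1 y1 y2)%C.

Definition bdcont (G : C -> C) x1 x2 y1 y2 :=
  (forall x, x1 <= x <= x2 -> ccont G (x,y1) /\ ccont G (x,y2)) /\
  (forall y, y1 <= y <= y2 -> ccont G (x1,y) /\ ccont G (x2,y)).

Lemma cex_h G y a b : a <= b -> (forall x, a <= x <= b -> ccont G (x,y)) -> cex (fun x => G (x,y)) a b.
Proof.
  intros Hab H. apply cex_cont. intros t Ht. rewrite Rmin_left, Rmax_right in Ht by lra.
  apply ccont_h, H, Ht.
Qed.

Lemma cex_v G x a b : a <= b -> (forall y, a <= y <= b -> ccont G (x,y)) -> cex (fun y => G (x,y)) a b.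
Proof.
  intros Hab H. apply cex_cont. intros t Ht. rewrite Rmin_left, Rmax_right in Ht by lra.
  apply ccont_v, H, Ht.
Qed.

Lemma bd_split_x G x1 xm x2 y1 y2 : x1 <= xm <= x2 -> y1 <= y2 ->
  bdcont G x1 xm y1 y2 -> bdcont G xm x2 y1 y2 ->
  bd G x1 x2 y1 y2 = (bd G x1 xm y1 y2 + bd G xm x2 y1 y2)%C.
Proof.
  intros Hx Hy [Ha1 Ha2] [Hb1 Hb2]. unfold bd, hI.
  rewrite <- (CI_chasles (fun x => G (x,y1)) x1 xm x2).
  rewrite <- (CI_chasles (fun x => G (x,y2)) x1 xm x2).
  ring.
  all: apply cex_h; [lra|]; intros x Hx'; first [destruct (Ha1 x ltac:(lra)) as [? ?] | destruct (Hb1 x ltac:(lra)) as [? ?]]; assumption.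
Qed.

Lemma bd_split_y G x1 x2 y1 ym y2 : x1 <= x2 -> y1 <= ym <= y2 ->
  bdcont G x1 x2 y1 ym -> bdcont G x1 x2 ym y2 ->
  bd G x1 x2 y1 y2 = (bd G x1 x2 y1 ym + bd G x1 x2 ym y2)%C.
Proof.
  intros Hx Hy [Ha1 Ha2] [Hb1 Hb2]. unfold bd, vI.
  rewrite <- (CI_chasles (fun y => G (x1,y)) y1 ym y2).
  rewrite <- (CI_chasles (fun y => G (x2,y)) y1 ym y2).
  ring.
  all: apply cex_v; [lra|]; intros y Hy'; first [destruct (Ha2 y ltac:(lra)) as [? ?] | destruct (Hb2 y ltac:(lra)) as [? ?]]; assumption.
Qed.

Lemma is_RInt_id a b : is_RInt (fun t => t) a b ((b*b - a*a)/2).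
Proof.
  apply (is_RInt_ext (fun t => pow t 1)). intros; simpl; ring.
  replace ((b*b - a*a)/2) with (pow b 2 / INR 2 - pow a 2 / INR 2) by (simpl; field).
  apply is_RInt_pow.
Qed.

Lemma is_RInt_Rconst (c : R) a b : is_RInt (fun _ => c) a b ((b - a) * c).
Proof.
  replace ((b - a) * c) with (scal (b - a) c) by (unfold scal; simpl; unfold mult; simpl; ring).
  apply (is_RInt_const (V:=R_CompleteNormedModule)).
Qed.

Lemma CI_h_affine (a b : C) y x1 x2 :
  CI (fun x => (a + b * (x,y))%C) x1 x2 = (RtoC (x2 - x1) * a + b * (((x2*x2 - x1*x1)/2)%R, ((x2 - x1) * y)%R))%C.
Proof.
  apply CI_unique. apply is_RInt_Cplus.
  - rewrite <- CI_const. apply CI_correct. apply cex_cont. intros; apply continuous_const.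
  - apply is_RInt_Cmult. apply is_RInt_C_pair; simpl. apply is_RInt_id. apply is_RInt_Rconst.
Qed.

Lemma CI_v_affine (a b : C) x y1 y2 :
  CI (fun y => (a + b * (x,y))%C) y1 y2 = (RtoC (y2 - y1) * a + b * (((y2 - y1) * x)%R, ((y2*y2 - y1*y1)/2)%R))%C.
Proof.
  apply CI_unique. apply is_RInt_Cplus.
  - rewrite <- CI_const. apply CI_correct. apply cex_cont. intros; apply continuous_const.
  - apply is_RInt_Cmult. apply is_RInt_C_pair; simpl. apply is_RInt_Rconst. apply is_RInt_id.
Qed.

Lemma bd_affine (a b : C) x1 x2 y1 y2 : bd (fun z => (a + b * z)%C) x1 x2 y1 y2 = 0%C.
Proof.
  unfold bd, hI, vI. rewrite !CI_h_affine, !CI_v_affine.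
  unfold Ci, RtoC, Cplus, Cminus, Cmult, Copp, Cplus. destruct a as [a1 a2], b as [b1 b2]. simpl.
  f_equal; field.
Qed.


Lemma bdcont_h G x1 x2 y1 y2 : x1 <= x2 -> y1 <= y2 -> bdcont G x1 x2 y1 y2 ->
  cex (fun x => G (x,y1)) x1 x2 /\ cex (fun x => G (x,y2)) x1 x2.
Proof.
  intros Hx Hy [H1 H2]. split; apply cex_h; try lra; intros x Hx'; apply (H1 x Hx').
Qed.
Lemma bdcont_v G x1 x2 y1 y2 : x1 <= x2 -> y1 <= y2 -> bdcont G x1 x2 y1 y2 ->
  cex (fun y => G (x1,y)) y1 y2 /\ cex (fun y => G (x2,y)) y1 y2.
Proof.
  intros Hx Hy [H1 H2]. split; apply cex_v; try lra; intros y Hy'; apply (H2 y Hy').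
Qed.

Lemma bd_plus G1 G2 x1 x2 y1 y2 : x1 <= x2 -> y1 <= y2 ->
  bdcont G1 x1 x2 y1 y2 -> bdcont G2 x1 x2 y1 y2 ->
  bd (fun z => (G1 z + G2 z)%C) x1 x2 y1 y2 = (bd G1 x1 x2 y1 y2 + bd G2 x1 x2 y1 y2)%C.
Proof.
  intros Hx Hy HG1 HG2. unfold bd, hI, vI.
  destruct (bdcont_h _ _ _ _ _ Hx Hy HG1) as [a1 a2].
  destruct (bdcont_v _ _ _ _ _ Hx Hy HG1) as [a3 a4].
  destruct (bdcont_h _ _ _ _ _ Hx Hy HG2) as [b1 b2].
  destruct (bdcont_v _ _ _ _ _ Hx Hy HG2) as [b3 b4].
  rewrite (CI_plus _ _ _ _ a1 b1), (CI_plus _ _ _ _ a2 b2), (CI_plus _ _ _ _ a3 b3), (CI_plus _ _ _ _ a4 b4).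
  ring.
Qed.

Lemma bd_mult G c x1 x2 y1 y2 : x1 <= x2 -> y1 <= y2 ->
  bdcont G x1 x2 y1 y2 ->
  bd (fun z => (c * G z)%C) x1 x2 y1 y2 = (c * bd G x1 x2 y1 y2)%C.
Proof.
  intros Hx Hy HG1. unfold bd, hI, vI.
  destruct (bdcont_h _ _ _ _ _ Hx Hy HG1) as [a1 a2].
  destruct (bdcont_v _ _ _ _ _ Hx Hy HG1) as [a3 a4].
  rewrite (CI_mult _ _ _ c a1), (CI_mult _ _ _ c a2), (CI_mult _ _ _ c a3), (CI_mult _ _ _ c a4).
  ring.
Qed.

Lemma Cmod_Ci_mult z : Cmod (Ci * z)%C = Cmod z.
Proof. rewrite Cmod_mult, Cmod_Ci. ring. Qed.

Lemma Cmod_minus_le a b : Cmod (a - b)%C <= Cmod a + Cmod b.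
Proof. unfold Cminus. eapply Rle_trans. apply Cmod_triangle. rewrite Cmod_opp. lra. Qed.

Lemma bd_bound G x1 x2 y1 y2 B : x1 <= x2 -> y1 <= y2 ->
  bdcont G x1 x2 y1 y2 ->
  (forall x, x1 <= x <= x2 -> Cmod (G (x,y1)) <= B /\ Cmod (G (x,y2)) <= B) ->
  (forall y, y1 <= y <= y2 -> Cmod (G (x1,y)) <= B /\ Cmod (G (x2,y)) <= B) ->
  Cmod (bd G x1 x2 y1 y2) <= 2 * ((x2 - x1) + (y2 - y1)) * B.
Proof.
  intros Hx Hy [Ha1 Ha2] HB1 HB2. unfold bd, hI, vI.
  assert (E1 : Cmod (CI (fun x => G (x,y1)) x1 x2) <= (x2 - x1) * B).
  { apply CI_bound. lra. apply cex_h. lra. intros x Hx'; exact (proj1 (Ha1 x Hx')). intros t Ht; exact (proj1 (HB1 t Ht)). }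
  assert (E2 : Cmod (CI (fun x => G (x,y2)) x1 x2) <= (x2 - x1) * B).
  { apply CI_bound. lra. apply cex_h. lra. intros x Hx'; exact (proj2 (Ha1 x Hx')). intros t Ht; exact (proj2 (HB1 t Ht)). }
  assert (E3 : Cmod (CI (fun y => G (x1,y)) y1 y2) <= (y2 - y1) * B).
  { apply CI_bound. lra. apply cex_v. lra. intros x Hx'; exact (proj1 (Ha2 x Hx')). intros t Ht; exact (proj1 (HB2 t Ht)). }
  assert (E4 : Cmod (CI (fun y => G (x2,y)) y1 y2) <= (y2 - y1) * B).
  { apply CI_bound. lra. apply cex_v. lra. intros x Hx'; exact (proj2 (Ha2 x Hx')). intros t Ht; exact (proj2 (HB2 t Ht)). }
  eapply Rle_trans. apply Cmod_minus_le.
  rewrite Cmod_Ci_mult.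
  eapply Rle_trans. apply Rplus_le_compat_r. apply Cmod_minus_le.
  eapply Rle_trans. apply Rplus_le_compat_r. apply Rplus_le_compat_r. apply Cmod_triangle.
  rewrite Cmod_Ci_mult. lra.
Qed.

Definition hol (G : C -> C) (z : C) := @ex_derive C_AbsRing C_NormedModule G z.

Lemma bd_ext G G' x1 x2 y1 y2 : (forall z, G z = G' z) -> bd G x1 x2 y1 y2 = bd G' x1 x2 y1 y2.
Proof.
  intros H. unfold bd, hI, vI.
  rewrite (CI_ext (fun x => G (x,y1)) (fun x => G' (x,y1))), (CI_ext (fun x => G (x,y2)) (fun x => G' (x,y2))),
    (CI_ext (fun y => G (x1,y)) (fun y => G' (x1,y))), (CI_ext (fun y => G (x2,y)) (fun y => G' (x2,y))).
  reflexivity. all: intros; apply H.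
Qed.

Lemma Cmod_le_sum (a b : R) : Cmod (a,b) <= Rabs a + Rabs b.
Proof.
  unfold Cmod; simpl. apply Rsqr_incr_0_var. rewrite Rsqr_sqrt by nra.
  unfold Rsqr. pose proof (Rabs_pos a). pose proof (Rabs_pos b).
  assert (a * (a*1) = Rabs a * Rabs a). { rewrite <- Rabs_mult. rewrite Rabs_right by nra. ring. }
  assert (b * (b*1) = Rabs b * Rabs b). { rewrite <- Rabs_mult. rewrite Rabs_right by nra. ring. }
  nra. pose proof (Rabs_pos a). pose proof (Rabs_pos b). lra.
Qed.

Lemma derive_approx G z l : @is_derive C_AbsRing C_NormedModule G z l ->
  forall eps : posreal, exists del : posreal, forall w : C,
    Rabs (fst w - fst z) < del -> Rabs (snd w - snd z) < del ->
    Cmod (G w - G z - (w - z) * l)%C <= eps * Cmod (w - z)%C.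
Proof.
  intros [_ H] eps.
  assert (Hl : is_filter_lim (locally z) z) by (intros P HP; exact HP).
  specialize (H z Hl eps).
  apply locally_C in H. apply locally_C_elim in H. destruct H as [del Hd].
  exists del. intros w H1 H2. exact (Hd w H1 H2).
Qed.

Lemma pow2_large (c d : R) : 0 < d -> exists n : nat, c / 2 ^ n < d.
Proof.
  intros Hd.
  destruct (archimed (c / d)) as [H1 _].
  destruct (Z_le_gt_dec (up (c/d)) 0) as [Hz|Hz].
  - exists 0%nat. simpl. apply IZR_le in Hz. 
    assert (c / d < 0) by lra. assert (c < 0). { apply (Rmult_lt_reg_r (/d)). apply Rinv_0_lt_compat; lra. rewrite Rmult_0_l. exact H. }
    lra.
  - exists (Z.to_nat (up (c/d))).
    assert (HP : forall n : nat, INR n < 2 ^ n).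
    { induction n. simpl; lra. rewrite S_INR. simpl. assert (1 <= 2 ^ n) by (apply pow_R1_Rle; lra). lra. }
    pose proof (HP (Z.to_nat (up (c/d)))) as Hn. rewrite INR_IZR_INZ, Z2Nat.id in Hn by lia.
    assert (0 < 2 ^ Z.to_nat (up (c / d))) by (apply pow_lt; lra).
    apply (Rmult_lt_reg_r (2 ^ Z.to_nat (up (c / d)))). exact H.
    unfold Rdiv. rewrite Rmult_assoc, Rinv_l by lra. rewrite Rmult_1_r.
    assert (Heq : c / d * d = c) by (field; lra).
    assert (Hq : c / d < 2 ^ Z.to_nat (up (c / d))) by lra.
    apply (Rmult_lt_compat_r d) in Hq; [|exact Hd]. lra.
Qed.

Record rect := mkR { ra : R; rb : R; rc : R; rd : R }.
Definition bdR G r := bd G (ra r) (rb r) (rc r) (rd r).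
Definition mx r := (ra r + rb r)/2.
Definition my r := (rc r + rd r)/2.
Definition q1 r := mkR (ra r) (mx r) (rc r) (my r).
Definition q2 r := mkR (mx r) (rb r) (rc r) (my r).
Definition q3 r := mkR (ra r) (mx r) (my r) (rd r).
Definition q4 r := mkR (mx r) (rb r) (my r) (rd r).

Definition step G r :=
  if Rle_dec (Cmod (bdR G r) / 4) (Cmod (bdR G (q1 r))) then q1 r else
  if Rle_dec (Cmod (bdR G r) / 4) (Cmod (bdR G (q2 r))) then q2 r else
  if Rle_dec (Cmod (bdR G r) / 4) (Cmod (bdR G (q3 r))) then q3 r else q4 r.

Definition incont G r := forall x y, ra r <= x <= rb r -> rc r <= y <= rd r -> ccont G (x,y).



Lemma incont_bdcont G x1 x2 y1 y2 : x1 <= x2 -> y1 <= y2 ->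
  (forall x y, x1 <= x <= x2 -> y1 <= y <= y2 -> ccont G (x,y)) -> bdcont G x1 x2 y1 y2.
Proof.
  intros Hx Hy H. split; intros t Ht; split; apply H; lra.
Qed.

Lemma bd_quarters G r : ra r <= rb r -> rc r <= rd r -> incont G r ->
  bdR G r = (bdR G (q1 r) + bdR G (q2 r) + bdR G (q3 r) + bdR G (q4 r))%C.
Proof.
  intros Hx Hy H. unfold bdR, q1, q2, q3, q4, mx, my; simpl.
  destruct r as [a b c d]; simpl in *. unfold incont in H; simpl in H.
  rewrite (bd_split_x G a ((a+b)/2) b c d) by (try lra; apply incont_bdcont; try lra; intros; apply H; lra).
  rewrite (bd_split_y G a ((a+b)/2) c ((c+d)/2) d) by (try lra; apply incont_bdcont; try lra; intros; apply H; lra).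
  rewrite (bd_split_y G ((a+b)/2) b c ((c+d)/2) d) by (try lra; apply incont_bdcont; try lra; intros; apply H; lra).
  ring.
Qed.

Lemma step_geom G r : ra r <= rb r -> rc r <= rd r ->
  let s := step G r in
  ra r <= ra s /\ ra s <= rb s /\ rb s <= rb r /\ rb s - ra s = (rb r - ra r)/2 /\
  rc r <= rc s /\ rc s <= rd s /\ rd s <= rd r /\ rd s - rc s = (rd r - rc r)/2.
Proof.
  intros Hx Hy s. unfold s, step.
  destruct Rle_dec; [|destruct Rle_dec; [|destruct Rle_dec]];
  unfold q1, q2, q3, q4, mx, my; simpl; repeat split; lra.
Qed.

Lemma step_bd G r : ra r <= rb r -> rc r <= rd r -> incont G r ->
  Cmod (bdR G r) / 4 <= Cmod (bdR G (step G r)).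
Proof.
  intros Hx Hy H. pose proof (bd_quarters G r Hx Hy H) as E.
  unfold step. destruct Rle_dec as [h1|h1]; [exact h1|].
  destruct Rle_dec as [h2|h2]; [exact h2|].
  destruct Rle_dec as [h3|h3]; [exact h3|].
  assert (T : Cmod (bdR G r) <= Cmod (bdR G (q1 r)) + Cmod (bdR G (q2 r)) + Cmod (bdR G (q3 r)) + Cmod (bdR G (q4 r))).
  { rewrite E. eapply Rle_trans. apply Cmod_triangle. apply Rplus_le_compat_r.
    eapply Rle_trans. apply Cmod_triangle. apply Rplus_le_compat_r. apply Cmod_triangle. }
  lra.
Qed.

Definition rseq G r0 n := Nat.iter n (step G) r0.

Lemma rseq_geom G r0 n : ra r0 <= rb r0 -> rc r0 <= rd r0 ->
  let s := rseq G r0 n in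
  ra r0 <= ra s /\ ra s <= rb s /\ rb s <= rb r0 /\ rb s - ra s = (rb r0 - ra r0)/2^n /\
  rc r0 <= rc s /\ rc s <= rd s /\ rd s <= rd r0 /\ rd s - rc s = (rd r0 - rc r0)/2^n.
Proof.
  intros Hx Hy. induction n as [|n IH]; simpl.
  - unfold rseq; simpl. repeat split; lra.
  - destruct IH as (h1 & h2 & h3 & h4 & h5 & h6 & h7 & h8).
    change (rseq G r0 (S n)) with (step G (rseq G r0 n)).
    pose proof (step_geom G (rseq G r0 n) h2 h6) as K. simpl in K.
    destruct K as (k1 & k2 & k3 & k4 & k5 & k6 & k7 & k8).
    assert (P : 0 < 2 ^ n) by (apply pow_lt; lra).
    repeat split; try lra.
    rewrite k4, h4. field. lra.
    rewrite k8, h8. field. lra.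
Qed.

Lemma rseq_mono G r0 n : ra r0 <= rb r0 -> rc r0 <= rd r0 ->
  ra (rseq G r0 n) <= ra (rseq G r0 (S n)) /\ rb (rseq G r0 (S n)) <= rb (rseq G r0 n) /\
  rc (rseq G r0 n) <= rc (rseq G r0 (S n)) /\ rd (rseq G r0 (S n)) <= rd (rseq G r0 n).
Proof.
  intros Hx Hy. destruct (rseq_geom G r0 n Hx Hy) as (h1 & h2 & h3 & h4 & h5 & h6 & h7 & h8).
  change (rseq G r0 (S n)) with (step G (rseq G r0 n)).
  pose proof (step_geom G (rseq G r0 n) h2 h6) as K. simpl in K. lra.
Qed.

Lemma rseq_bd G r0 n : ra r0 <= rb r0 -> rc r0 <= rd r0 -> incont G r0 ->
  Cmod (bdR G r0) <= 4 ^ n * Cmod (bdR G (rseq G r0 n)).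
Proof.
  intros Hx Hy H. induction n as [|n IH].
  - simpl. unfold rseq; simpl. lra.
  - destruct (rseq_geom G r0 n Hx Hy) as (h1 & h2 & h3 & h4 & h5 & h6 & h7 & h8).
    assert (Hc : incont G (rseq G r0 n)).
    { intros x y Ha Hb. apply H; lra. }
    pose proof (step_bd G (rseq G r0 n) h2 h6 Hc) as K.
    change (rseq G r0 (S n)) with (step G (rseq G r0 n)). simpl.
    assert (0 < 4 ^ n) by (apply pow_lt; lra). nra.
Qed.

Lemma nested_limit (a b : nat -> R) : (forall n, a n <= a (S n)) -> (forall n, b (S n) <= b n) ->
  (forall n, a n <= b n) -> exists l, forall n, a n <= l <= b n.
Proof.
  intros Ha Hb Hab.
  assert (Bm : forall m n, (m <= n)%nat -> b n <= b m).
  { intros m n Hmn. induction Hmn. lra. specialize (Hb m0). lra. }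
  assert (Am : forall m n, (m <= n)%nat -> a m <= a n).
  { intros m n Hmn. induction Hmn. lra. specialize (Ha m0). lra. }
  assert (Hg : Un_growing a) by (intros n; apply Ha).
  assert (Hu : has_ub a).
  { exists (b 0%nat). intros x [i ->]. specialize (Bm 0%nat i ltac:(lia)). specialize (Hab i). lra. }
  destruct (growing_cv a Hg Hu) as [l Hl].
  exists l. intros n. split.
  - apply (growing_ineq a l Hg Hl).
  - destruct (Rle_dec l (b n)) as [h|h]; [exact h|].
    exfalso. destruct (Hl (l - b n)) as [N HN]. lra.
    specialize (HN (max N n) ltac:(lia)). unfold Rdist in HN.
    specialize (Bm n (max N n) ltac:(lia)). specialize (Hab (max N n)).
    rewrite Rabs_left1 in HN by lra. lra.
Qed.

Lemma conv1 f z l : @is_derive C_AbsRing C_NormedModule f z l -> @is_derive C_AbsRing (AbsRing_NormedModule C_AbsRing) f z l.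
Proof. intros [H1 H2]. split. 
 - destruct H1 as [a b c]. split. exact a. exact b. destruct c as [M [HM HM']]. exists M. split. exact HM. exact HM'.
 - intros x Hx eps. specialize (H2 x Hx eps). exact H2.
Qed.
Lemma conv2 f z l : @is_derive C_AbsRing (AbsRing_NormedModule C_AbsRing) f z l -> @is_derive C_AbsRing C_NormedModule f z l.
Proof. intros [H1 H2]. split. 
 - destruct H1 as [a b c]. split. exact a. exact b. destruct c as [M [HM HM']]. exists M. split. exact HM. exact HM'.
 - intros x Hx eps. specialize (H2 x Hx eps). exact H2.
Qed.
Lemma hol_plus f g z : hol f z -> hol g z -> hol (fun w => f w + g w)%C z.
Proof. intros H1 H2. exact (@ex_derive_plus C_AbsRing C_NormedModule f g z H1 H2). Qed.
Lemma hol_mult f g z : hol f z -> hol g z -> hol (fun w => f w * g w)%C z.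
Proof. intros [l1 H1] [l2 H2]. eexists. apply conv2. exact (@is_derive_mult C_AbsRing f g z l1 l2 (conv1 _ _ _ H1) (conv1 _ _ _ H2) Cmult_comm). Qed.
Lemma hol_opp f z : hol f z -> hol (fun w => - f w)%C z.
Proof. intros H1. exact (@ex_derive_opp C_AbsRing C_NormedModule f z H1). Qed.
Lemma hol_const c z : hol (fun _ => c) z.
Proof. exact (@ex_derive_const C_AbsRing C_NormedModule c z). Qed.
Lemma hol_id z : hol (fun w => w) z.
Proof. eexists. apply conv2. apply (@is_derive_id C_AbsRing). Qed.
Lemma hol_minus f g z : hol f z -> hol g z -> hol (fun w => f w - g w)%C z.
Proof. intros H1 H2. unfold Cminus. apply hol_plus. exact H1. apply hol_opp. exact H2. Qed.

Theorem goursat G x1 x2 y1 y2 : x1 <= x2 -> y1 <= y2 ->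
  (forall x y, x1 <= x <= x2 -> y1 <= y <= y2 -> hol G (x,y)) ->
  bd G x1 x2 y1 y2 = 0%C.
Proof.
  intros Hx Hy Hd.
  set (r0 := mkR x1 x2 y1 y2).
  assert (Hc : incont G r0). { intros x y h1 h2. apply ex_derive_ccont, Hd; simpl in *; lra. }
  pose (s := rseq G r0).
  destruct (nested_limit (fun n => ra (s n)) (fun n => rb (s n))) as [xs Hxs];
  [intros n; apply (rseq_mono G r0 n Hx Hy) | intros n; apply (rseq_mono G r0 n Hx Hy)
  | intros n; apply (rseq_geom G r0 n Hx Hy) |].
  destruct (nested_limit (fun n => rc (s n)) (fun n => rd (s n))) as [ys Hys];
  [intros n; apply (rseq_mono G r0 n Hx Hy) | intros n; apply (rseq_mono G r0 n Hx Hy)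
  | intros n; apply (rseq_geom G r0 n Hx Hy) |].
  simpl in Hxs, Hys.
  assert (Hin : x1 <= xs <= x2 /\ y1 <= ys <= y2).
  { destruct (Hxs 0%nat), (Hys 0%nat). unfold s, rseq in *; simpl in *. lra. }
  destruct (Hd xs ys (proj1 Hin) (proj2 Hin)) as [l Hl].
  pose (W := (x2 - x1) + (y2 - y1)).
  assert (HW : 0 <= W) by (unfold W; lra).
  apply Cmod_eq_0.
  apply Rle_antisym; [|apply Cmod_ge_0].
  apply Rnot_lt_le. intros Hpos.
  set (eps := Cmod (bd G x1 x2 y1 y2) / (4 * (W*W + 1))).
  assert (Heps : 0 < eps) by (unfold eps; apply Rdiv_lt_0_compat; nra).
  destruct (derive_approx G (xs,ys) l Hl (mkposreal eps Heps)) as [del Hdel].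
  simpl in Hdel.
  destruct (pow2_large W del (cond_pos del)) as [n Hn].
  destruct (rseq_geom G r0 n Hx Hy) as (h1 & h2 & h3 & h4 & h5 & h6 & h7 & h8).
  fold s in h1, h2, h3, h4, h5, h6, h7, h8. simpl in h1, h3, h4, h5, h7, h8.
  assert (P2 : 0 < 2 ^ n) by (apply pow_lt; lra).
  set (a := (G (xs,ys) - (xs,ys) * l)%C).
  set (phi := fun z => (G z - (a + l * z))%C).
  assert (Eg : bdR G (s n) = bdR phi (s n)).
  { unfold bdR. rewrite (bd_ext G (fun z => (phi z + (a + l * z))%C)) by (intros; unfold phi; ring).
    rewrite bd_plus, bd_affine. ring. lra. lra.
    - apply incont_bdcont; try lra. intros x y q1' q2'. unfold phi.
      apply ex_derive_ccont. 
      apply hol_minus. apply Hd; lra. apply hol_plus. apply hol_const. apply hol_mult. apply hol_const. apply hol_id.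
    - apply incont_bdcont; try lra. intros x y q1' q2'.
      apply ex_derive_ccont.
      apply hol_plus. apply hol_const. apply hol_mult. apply hol_const. apply hol_id. }
  assert (Hphi : forall x y, ra (s n) <= x <= rb (s n) -> rc (s n) <= y <= rd (s n) ->
      Cmod (phi (x,y)) <= eps * (W / 2 ^ n)).
  { intros x y hx hy.
    destruct (Hxs n) as [u1 u2]. destruct (Hys n) as [u3 u4].
    assert (E : phi (x,y) = (G (x,y) - G (xs,ys) - ((x,y) - (xs,ys)) * l)%C) by (unfold phi, a; ring).
    rewrite E.
    assert (Hx' : Rabs (x - xs) <= (x2 - x1) / 2 ^ n) by (apply Rabs_le; lra).
    assert (Hy' : Rabs (y - ys) <= (y2 - y1) / 2 ^ n) by (apply Rabs_le; lra).
    assert (HWn : W / 2 ^ n = (x2 - x1) / 2 ^ n + (y2 - y1) / 2 ^ n) by (unfold W; field; lra).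
    eapply Rle_trans. apply Hdel; simpl; lra.
    apply Rmult_le_compat_l. lra.
    eapply Rle_trans. unfold Cminus, Copp, Cplus; simpl. apply Cmod_le_sum.
    replace (x + - xs) with (x - xs) by ring. replace (y + - ys) with (y - ys) by ring. lra. }
  assert (Hbphi : Cmod (bdR phi (s n)) <= 2 * (W / 2 ^ n) * (eps * (W / 2 ^ n))).
  { unfold bdR. replace (W / 2 ^ n) with ((rb (s n) - ra (s n)) + (rd (s n) - rc (s n))) at 1
      by (rewrite h4, h8; unfold W; field; lra).
    apply bd_bound; try lra.
    - apply incont_bdcont; try lra. intros x y q1' q2'. unfold phi.
      apply ex_derive_ccont.
      apply hol_minus. apply Hd; lra. apply hol_plus. apply hol_const. apply hol_mult. apply hol_const. apply hol_id.
    - intros x hx. split; apply Hphi; lra.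
    - intros y hy. split; apply Hphi; lra. }
  pose proof (rseq_bd G r0 n Hx Hy Hc) as Hr. fold s in Hr.
  unfold bdR in Hr at 1. simpl in Hr.
  rewrite Eg in Hr.
  assert (E4 : 4 ^ n = 2 ^ n * 2 ^ n) by (rewrite <- Rpow_mult_distr; f_equal; ring).
  assert (Hfin : Cmod (bd G x1 x2 y1 y2) <= 2 * eps * (W * W)).
  { eapply Rle_trans. exact Hr. rewrite E4.
    eapply Rle_trans. apply Rmult_le_compat_l. nra. exact Hbphi.
    right. field. lra. }
  unfold eps in Hfin.
  assert (Hq : 2 * (Cmod (bd G x1 x2 y1 y2) / (4 * (W * W + 1))) * (W * W) < Cmod (bd G x1 x2 y1 y2)).
  { apply (Rmult_lt_reg_r (4 * (W*W+1))). nra.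
    replace (2 * (Cmod (bd G x1 x2 y1 y2) / (4 * (W * W + 1))) * (W * W) * (4 * (W * W + 1)))
      with (2 * Cmod (bd G x1 x2 y1 y2) * (W * W)) by (field; nra). nra. }
  lra.
Qed.

Lemma bdcont_avoid q x1 x2 y1 y2 a b u1 u2 v1 v2 :
  (forall x y, x1 <= x <= x2 -> y1 <= y <= y2 -> (x <> a \/ y <> b) -> hol q (x,y)) ->
  x1 <= u1 -> u1 <= u2 -> u2 <= x2 -> y1 <= v1 -> v1 <= v2 -> v2 <= y2 ->
  u1 <> a -> u2 <> a -> v1 <> b -> v2 <> b -> bdcont q u1 u2 v1 v2.
Proof.
  intros H h1 h2 h3 h4 h5 h6 n1 n2 n3 n4.
  split; intros t Ht; split; apply ex_derive_ccont, H; try lra; tauto.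
Qed.

Lemma goursat_piece q x1 x2 y1 y2 a b u1 u2 v1 v2 :
  (forall x y, x1 <= x <= x2 -> y1 <= y <= y2 -> (x <> a \/ y <> b) -> hol q (x,y)) ->
  x1 <= u1 -> u1 <= u2 -> u2 <= x2 -> y1 <= v1 -> v1 <= v2 -> v2 <= y2 ->
  (u2 < a \/ a < u1 \/ v2 < b \/ b < v1) -> bd q u1 u2 v1 v2 = 0%C.
Proof.
  intros H h1 h2 h3 h4 h5 h6 Hout. apply goursat; try lra.
  intros x y hx hy. apply H; [lra|lra|].
  destruct Hout as [o|[o|[o|o]]]; [left|left|right|right]; lra.
Qed.

Theorem goursat_exc q x1 x2 y1 y2 a b :
  x1 < a < x2 -> y1 < b < y2 ->
  (forall x y, x1 <= x <= x2 -> y1 <= y <= y2 -> (x <> a \/ y <> b) -> hol q (x,y)) ->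
  (exists rho B, 0 < rho /\ forall x y, Rabs (x - a) < rho -> Rabs (y - b) < rho -> (x <> a \/ y <> b) ->
      Cmod (q (x,y)) <= B) ->
  bd q x1 x2 y1 y2 = 0%C.
Proof.
  intros Ha Hb H [rho [B [Hrho HB]]].
  assert (Key : forall s, 0 < s -> s < rho -> s < a - x1 -> s < x2 - a -> s < b - y1 -> s < y2 - b ->
     Cmod (bd q x1 x2 y1 y2) <= 8 * s * B).
  { intros s hs1 hs2 hs3 hs4 hs5 hs6.
    assert (Hav : forall u1 u2 v1 v2, x1 <= u1 -> u1 <= u2 -> u2 <= x2 -> y1 <= v1 -> v1 <= v2 -> v2 <= y2 ->
       u1 <> a -> u2 <> a -> v1 <> b -> v2 <> b -> bdcont q u1 u2 v1 v2)
      by (intros; eapply bdcont_avoid; eauto).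
    rewrite (bd_split_x q x1 (a - s) x2 y1 y2) by (try lra; apply Hav; lra).
    rewrite (bd_split_x q (a - s) (a + s) x2 y1 y2) by (try lra; apply Hav; lra).
    rewrite (bd_split_y q (a - s) (a + s) y1 (b - s) y2) by (try lra; apply Hav; lra).
    rewrite (bd_split_y q (a - s) (a + s) (b - s) (b + s) y2) by (try lra; apply Hav; lra).
    rewrite (goursat_piece q x1 x2 y1 y2 a b x1 (a - s) y1 y2) by (auto; lra).
    rewrite (goursat_piece q x1 x2 y1 y2 a b (a + s) x2 y1 y2) by (auto; lra).
    rewrite (goursat_piece q x1 x2 y1 y2 a b (a - s) (a + s) y1 (b - s)) by (auto; lra).
    rewrite (goursat_piece q x1 x2 y1 y2 a b (a - s) (a + s) (b + s) y2) by (auto; lra).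
    replace (0 + (0 + (bd q (a - s) (a + s) (b - s) (b + s) + 0) + 0))%C with (bd q (a - s) (a + s) (b - s) (b + s)) by ring.
    replace (8 * s * B) with (2 * (((a + s) - (a - s)) + ((b + s) - (b - s))) * B) by ring.
    apply bd_bound; try lra.
    - apply Hav; lra.
    - intros x hx. split; apply HB; try (apply Rabs_def1; lra); right; lra.
    - intros y hy. split; apply HB; try (apply Rabs_def1; lra); left; lra. }
  apply Cmod_eq_0. apply Rle_antisym; [|apply Cmod_ge_0].
  apply Rnot_lt_le. intros Hpos.
  set (m := Rmin (Rmin rho (Rmin (a - x1) (x2 - a))) (Rmin (b - y1) (y2 - b))).
  assert (Hm : 0 < m) by (unfold m; repeat apply Rmin_pos; lra).
  assert (Hm1 : m <= rho /\ m <= a - x1 /\ m <= x2 - a /\ m <= b - y1 /\ m <= y2 - b).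
  { unfold m.
    pose proof (Rmin_l (Rmin rho (Rmin (a - x1) (x2 - a))) (Rmin (b - y1) (y2 - b))).
    pose proof (Rmin_r (Rmin rho (Rmin (a - x1) (x2 - a))) (Rmin (b - y1) (y2 - b))).
    pose proof (Rmin_l rho (Rmin (a - x1) (x2 - a))). pose proof (Rmin_r rho (Rmin (a - x1) (x2 - a))).
    pose proof (Rmin_l (a - x1) (x2 - a)). pose proof (Rmin_r (a - x1) (x2 - a)).
    pose proof (Rmin_l (b - y1) (y2 - b)). pose proof (Rmin_r (b - y1) (y2 - b)).
    repeat split; lra. }
  assert (HB0 : 0 <= B).
  { specialize (Key (m/2) ltac:(lra) ltac:(lra) ltac:(lra) ltac:(lra) ltac:(lra) ltac:(lra)). nra. }
  set (s := Rmin (m/2) (Cmod (bd q x1 x2 y1 y2) / (16 * (B + 1)))).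
  assert (Hs1 : 0 < s) by (unfold s; apply Rmin_pos; [lra| apply Rdiv_lt_0_compat; lra]).
  assert (Hs2 : s <= m/2) by apply Rmin_l.
  assert (Hs3 : s <= Cmod (bd q x1 x2 y1 y2) / (16 * (B + 1))) by apply Rmin_r.
  specialize (Key s Hs1 ltac:(lra) ltac:(lra) ltac:(lra) ltac:(lra) ltac:(lra)).
  assert (8 * s * B <= 8 * B * (Cmod (bd q x1 x2 y1 y2) / (16 * (B + 1)))) by nra.
  assert (8 * B * (Cmod (bd q x1 x2 y1 y2) / (16 * (B + 1))) < Cmod (bd q x1 x2 y1 y2)).
  { apply (Rmult_lt_reg_r (16 * (B+1))). lra.
    replace (8 * B * (Cmod (bd q x1 x2 y1 y2) / (16 * (B + 1))) * (16 * (B + 1))) with (8 * B * Cmod (bd q x1 x2 y1 y2)) by (field; lra).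
    nra. }
  lra.
Qed.

Lemma is_derive_quad f z l K rho : 0 < rho ->
  (forall w, Cmod (w - z)%C < rho -> Cmod (f w - f z - (w - z) * l)%C <= K * (Cmod (w - z)%C * Cmod (w - z)%C)) ->
  @is_derive C_AbsRing C_NormedModule f z l.
Proof.
  intros Hr H. split.
  - apply (@is_linear_scal_l C_AbsRing C_NormedModule).
  - intros x Hx eps.
    apply (@is_filter_lim_locally_unique C_AbsRing (AbsRing_NormedModule C_AbsRing)) in Hx. subst x.
    assert (Hd : 0 < Rmin rho (eps / (Rabs K + 1))).
    { apply Rmin_pos. lra. apply Rdiv_lt_0_compat. apply cond_pos. pose proof (Rabs_pos K). lra. }
    exists (mkposreal _ Hd). intros w Hw. simpl in Hw. unfold ball in Hw; simpl in Hw. unfold AbsRing_ball in Hw.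
    change (Cmod (w - z)%C < Rmin rho (eps / (Rabs K + 1))) in Hw.
    change (Cmod (f w - f z - (w - z) * l)%C <= eps * Cmod (w - z)%C).
    pose proof (Rmin_l rho (eps / (Rabs K + 1))). pose proof (Rmin_r rho (eps / (Rabs K + 1))).
    eapply Rle_trans. apply H. lra.
    pose proof (Cmod_ge_0 (w - z)%C) as Hc. pose proof (Rabs_pos K).
    assert (Hk : K * (Cmod (w - z) * Cmod (w - z)) <= (Rabs K + 1) * Cmod (w - z) * Cmod (w - z)).
    { pose proof (Rle_abs K). nra. }
    assert (He : (Rabs K + 1) * Cmod (w - z) <= eps).
    { assert (Cmod (w - z) <= eps / (Rabs K + 1)) by lra.
      apply (Rmult_le_compat_l (Rabs K + 1)) in H3; [|lra].
      replace ((Rabs K + 1) * (eps / (Rabs K + 1))) with (pos eps) in H3 by (field; lra). lra. }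
    nra.
Qed.

Lemma Cmod_pos_neq (z : C) : z <> 0%C -> 0 < Cmod z.
Proof. intros H. apply Cmod_gt_0. exact H. Qed.

Lemma hol_inv z0 z : z <> z0 -> hol (fun w => / (w - z0))%C z.
Proof.
  intros Hz. exists (- / ((z - z0) * (z - z0)))%C.
  assert (Hn : (z - z0)%C <> 0%C) by (intros E; apply Hz; apply Ceq_minus; exact E).
  set (c := Cmod (z - z0)%C). assert (Hc : 0 < c) by (apply Cmod_pos_neq; exact Hn).
  apply (is_derive_quad _ _ _ (2 / (c * c * c)) (c / 2)). lra.
  intros w Hw.
  assert (Hwz : c / 2 <= Cmod (w - z0)%C).
  { assert (E : (z - z0 = (z - w) + (w - z0))%C) by ring.
    pose proof (Cmod_triangle (z - w)%C (w - z0)%C). rewrite <- E in H.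
    assert (Cmod (z - w)%C = Cmod (w - z)%C) by (rewrite <- Cmod_opp; f_equal; ring). fold c in H. lra. }
  assert (Hwn : (w - z0)%C <> 0%C) by (intros E; rewrite E, Cmod_0 in Hwz; lra).
  assert (E : (/ (w - z0) - / (z - z0) - (w - z) * - / ((z - z0) * (z - z0)))%C =
              ((w - z) * (w - z) * / ((w - z0) * (z - z0) * (z - z0)))%C).
  { field. split; [exact Hn| exact Hwn]. }
  rewrite E. rewrite !Cmod_mult, Cmod_inv by (repeat apply Cmult_neq_0; assumption).
  rewrite !Cmod_mult. fold c.
  pose proof (Cmod_ge_0 (w - z)%C).
  assert (0 < Cmod (w - z0)%C) by lra.
  assert (Hi : / (Cmod (w - z0)%C * c * c) <= 2 / (c * c * c)).
  { replace (2 / (c * c * c)) with (/ (c / 2 * c * c)) by (field; lra).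
    assert (0 < c * c) by nra. apply Rinv_le_contravar. nra. nra. }
  pose proof (Rmult_le_compat_l (Cmod (w - z)%C * Cmod (w - z)%C) _ _ ltac:(nra) Hi). lra.
Qed.

Lemma hol_ext f g z : (forall w, f w = g w) -> hol f z -> hol g z.
Proof. intros H [l Hl]. exists l. apply (@is_derive_ext C_AbsRing C_NormedModule f g z l H Hl). Qed.

Lemma hol_pow H z n : hol H z -> hol (fun w => Cpow (H w) n) z.
Proof.
  intros Hh. induction n as [|n IH].
  - simpl. apply hol_const.
  - simpl. apply hol_mult; assumption.
Qed.

Lemma cont_fst_C (f : R -> C) t : @continuous R_UniformSpace C_UniformSpace f t ->
  @continuous R_UniformSpace R_UniformSpace (fun s => fst (f s)) t.
Proof.
  intros H. apply (continuous_comp f fst). exact H.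
  destruct (f t) as [p q]. apply (@continuous_fst R_UniformSpace R_UniformSpace).
Qed.

Lemma cont_snd_C (f : R -> C) t : @continuous R_UniformSpace C_UniformSpace f t ->
  @continuous R_UniformSpace R_UniformSpace (fun s => snd (f s)) t.
Proof.
  intros H. apply (continuous_comp f snd). exact H.
  destruct (f t) as [p q]. apply (@continuous_snd R_UniformSpace R_UniformSpace).
Qed.

Lemma CI_fst f a b : cex f a b -> fst (CI f a b) = RInt (fun t => fst (f t)) a b.
Proof. intros H. symmetry. apply is_RInt_unique. apply is_RInt_C_fst. apply CI_correct, H. Qed.
Lemma CI_snd f a b : cex f a b -> snd (CI f a b) = RInt (fun t => snd (f t)) a b.
Proof. intros H. symmetry. apply is_RInt_unique. apply is_RInt_C_snd. apply CI_correct, H. Qed.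


Lemma RInt_pos_strict (g : R -> R) a b : a < b ->
  (forall t, a <= t <= b -> continuous g t) -> (forall t, a < t < b -> 0 < g t) -> 0 < RInt g a b.
Proof.
  intros Hab Hc Hp.
  assert (E : RInt (fun _ => 0) a b = 0).
  { rewrite RInt_const. unfold scal; simpl; unfold mult; simpl; ring. }
  rewrite <- E. apply RInt_lt; try assumption. intros; apply continuous_const.
Qed.

Lemma RInt_neg_strict (g : R -> R) a b : a < b ->
  (forall t, a <= t <= b -> continuous g t) -> (forall t, a < t < b -> g t < 0) -> RInt g a b < 0.
Proof.
  intros Hab Hc Hp.
  assert (E : RInt (fun _ => 0) a b = 0).
  { rewrite RInt_const. unfold scal; simpl; unfold mult; simpl; ring. }
  rewrite <- E. apply RInt_lt; try assumption. intros; apply continuous_const.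
Qed.

Definition kinv (z0 : C) := fun w : C => (/ (w - z0))%C.

Lemma ccont_kinv z0 x y : (x <> fst z0 \/ y <> snd z0) -> ccont (kinv z0) (x,y).
Proof.
  intros H. apply ex_derive_ccont, hol_inv. destruct z0 as [a b]. simpl in H.
  intros E. injection E. intros; tauto.
Qed.

Lemma sumsq_pos u v : (u <> 0 \/ v <> 0) -> 0 < u * (u * 1) + v * (v * 1).
Proof.
  intros [H|H]; [assert (0 < u * u) by (apply Rsqr_pos_lt in H; unfold Rsqr in H; exact H)
                 |assert (0 < v * v) by (apply Rsqr_pos_lt in H; unfold Rsqr in H; exact H)]; nra.
Qed.

Lemma winding_nz x1 x2 y1 y2 a b : x1 < a < x2 -> y1 < b < y2 ->
  bd (kinv (a,b)) x1 x2 y1 y2 <> 0%C.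
Proof.
  intros Ha Hb E.
  assert (c1 : cex (fun x => kinv (a,b) (x,y1)) x1 x2).
  { apply cex_h. lra. intros; apply ccont_kinv; simpl; right; lra. }
  assert (c2 : cex (fun x => kinv (a,b) (x,y2)) x1 x2).
  { apply cex_h. lra. intros; apply ccont_kinv; simpl; right; lra. }
  assert (c3 : cex (fun y => kinv (a,b) (x1,y)) y1 y2).
  { apply cex_v. lra. intros; apply ccont_kinv; simpl; left; lra. }
  assert (c4 : cex (fun y => kinv (a,b) (x2,y)) y1 y2).
  { apply cex_v. lra. intros; apply ccont_kinv; simpl; left; lra. }
  assert (P1 : 0 < RInt (fun t => snd (kinv (a,b) (t,y1))) x1 x2).
  { apply RInt_pos_strict. lra.
    - intros t Ht. apply cont_snd_C, ccont_h, ccont_kinv. simpl; right; lra.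
    - intros t Ht. unfold kinv, Cinv, Cminus, Cplus, Copp; simpl. apply Rdiv_lt_0_compat. lra. apply sumsq_pos; lra. }
  assert (P2 : RInt (fun t => snd (kinv (a,b) (t,y2))) x1 x2 < 0).
  { apply RInt_neg_strict. lra.
    - intros t Ht. apply cont_snd_C, ccont_h, ccont_kinv. simpl; right; lra.
    - intros t Ht. unfold kinv, Cinv, Cminus, Cplus, Copp; simpl. unfold Rdiv. match goal with |- ?N * / ?D < 0 => assert (hD : 0 < / D) by (apply Rinv_0_lt_compat, sumsq_pos; lra) end. nra. }
  assert (P3 : 0 < RInt (fun t => fst (kinv (a,b) (x2,t))) y1 y2).
  { apply RInt_pos_strict. lra.
    - intros t Ht. apply cont_fst_C, ccont_v, ccont_kinv. simpl; left; lra.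
    - intros t Ht. unfold kinv, Cinv, Cminus, Cplus, Copp; simpl. apply Rdiv_lt_0_compat. lra. apply sumsq_pos; lra. }
  assert (P4 : RInt (fun t => fst (kinv (a,b) (x1,t))) y1 y2 < 0).
  { apply RInt_neg_strict. lra.
    - intros t Ht. apply cont_fst_C, ccont_v, ccont_kinv. simpl; left; lra.
    - intros t Ht. unfold kinv, Cinv, Cminus, Cplus, Copp; simpl. unfold Rdiv. match goal with |- ?N * / ?D < 0 => assert (hD : 0 < / D) by (apply Rinv_0_lt_compat, sumsq_pos; lra) end. nra. }
  assert (Es : snd (bd (kinv (a,b)) x1 x2 y1 y2) = 0) by (rewrite E; reflexivity).
  unfold bd, hI, vI in Es.
  change (snd (CI (fun x => kinv (a,b) (x,y1)) x1 x2) + (0 * snd (CI (fun y => kinv (a,b) (x2,y)) y1 y2) + 1 * fst (CI (fun y => kinv (a,b) (x2,y)) y1 y2))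
    + - snd (CI (fun x => kinv (a,b) (x,y2)) x1 x2) + - (0 * snd (CI (fun y => kinv (a,b) (x1,y)) y1 y2) + 1 * fst (CI (fun y => kinv (a,b) (x1,y)) y1 y2)) = 0) in Es.
  rewrite !CI_snd, !CI_fst in Es by assumption.
  lra.
Qed.

Lemma bernoulli s n : 0 <= s -> 1 + INR n * s <= (1 + s) ^ n.
Proof.
  intros Hs. induction n as [|n IH]. simpl; lra.
  rewrite S_INR. simpl. assert (0 <= INR n) by apply pos_INR. nra.
Qed.

Lemma pow_dominate r m w K : 0 <= r -> 0 <= m -> 0 < w ->
  (forall n, r ^ n * w <= K * m ^ n) -> r <= m.
Proof.
  intros Hr Hm Hw H. apply Rnot_lt_le. intros Hlt.
  destruct (Req_dec m 0) as [E|E].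
  - specialize (H 1%nat). rewrite E in H. simpl in H. nra.
  - assert (Hm' : 0 < m) by lra.
    set (s := r / m - 1). assert (Hs : 0 < s).
    { unfold s. apply (Rmult_lt_reg_r m). lra. unfold Rdiv. rewrite Rmult_minus_distr_r, Rmult_assoc, Rinv_l by lra. lra. }
    destruct (archimed (K / (w * s))) as [Ha _].
    set (n := Z.to_nat (up (K / (w * s)))).
    assert (Hn : K / (w * s) < INR n).
    { unfold n. destruct (Z_le_gt_dec (up (K / (w*s))) 0) as [Z|Z].
      - apply IZR_le in Z. pose proof (pos_INR (Z.to_nat (up (K / (w * s))))). lra.
      - rewrite INR_IZR_INZ, Z2Nat.id by lia. exact Ha. }
    specialize (H n).
    assert (Eq : r = m * (1 + s)) by (unfold s; field; lra).
    rewrite Eq, Rpow_mult_distr in H.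
    pose proof (bernoulli s n (Rlt_le _ _ Hs)) as Hb.
    assert (Hmn : 0 < m ^ n) by (apply pow_lt; lra).
    assert (H2 : (1 + s) ^ n * w <= K) by (apply (Rmult_le_reg_l (m ^ n)); [lra| nra]).
    assert (H3 : INR n * s * w < (1 + s) ^ n * w) by nra.
    assert (H4 : K < INR n * s * w).
    { apply (Rmult_lt_compat_r (w * s)) in Hn; [|nra].
      replace (K / (w * s) * (w * s)) with K in Hn by (field; split; lra). lra. }
    lra.
Qed.

Lemma Cmod_fst_le (z : C) : Rabs (fst z) <= Cmod z.
Proof. pose proof (Rmax_Cmod z). pose proof (Rmax_l (Rabs (fst z)) (Rabs (snd z))). lra. Qed.
Lemma Cmod_snd_le (z : C) : Rabs (snd z) <= Cmod z.
Proof. pose proof (Rmax_Cmod z). pose proof (Rmax_r (Rabs (fst z)) (Rabs (snd z))). lra. Qed.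

Lemma kinv_bound (a b x y d : R) : 0 < d -> (d <= Rabs (x - a) \/ d <= Rabs (y - b)) ->
  Cmod (kinv (a,b) (x,y)) <= / d.
Proof.
  intros Hd Hxy. unfold kinv.
  assert (Hc : d <= Cmod ((x,y) - (a,b))%C).
  { destruct Hxy as [h|h].
    - eapply Rle_trans. exact h. pose proof (Cmod_fst_le ((x,y) - (a,b))%C). simpl in H. 
      replace (x + - a) with (x - a) in H by ring. exact H.
    - eapply Rle_trans. exact h. pose proof (Cmod_snd_le ((x,y) - (a,b))%C). simpl in H.
      replace (y + - b) with (y - b) in H by ring. exact H. }
  assert (Hn : ((x,y) - (a,b))%C <> 0%C) by (intros E; rewrite E, Cmod_0 in Hc; lra).
  rewrite Cmod_inv by exact Hn. apply Rinv_le_contravar; lra.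
Qed.

Theorem maxp_inner H x1 x2 y1 y2 a b m :
  x1 < a < x2 -> y1 < b < y2 ->
  (forall x y, x1 <= x <= x2 -> y1 <= y <= y2 -> hol H (x,y)) ->
  (forall x, x1 <= x <= x2 -> Cmod (H (x,y1)) <= m /\ Cmod (H (x,y2)) <= m) ->
  (forall y, y1 <= y <= y2 -> Cmod (H (x1,y)) <= m /\ Cmod (H (x2,y)) <= m) ->
  Cmod (H (a,b)) <= m.
Proof.
  intros Ha Hb Hd HB1 HB2.
  set (z0 := (a,b)).
  set (d := Rmin (Rmin (a - x1) (x2 - a)) (Rmin (b - y1) (y2 - b))).
  assert (Hdp : 0 < d) by (unfold d; repeat apply Rmin_pos; lra).
  assert (Hd1 : d <= a - x1 /\ d <= x2 - a /\ d <= b - y1 /\ d <= y2 - b).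
  { unfold d.
    pose proof (Rmin_l (Rmin (a - x1) (x2 - a)) (Rmin (b - y1) (y2 - b))).
    pose proof (Rmin_r (Rmin (a - x1) (x2 - a)) (Rmin (b - y1) (y2 - b))).
    pose proof (Rmin_l (a - x1) (x2 - a)). pose proof (Rmin_r (a - x1) (x2 - a)).
    pose proof (Rmin_l (b - y1) (y2 - b)). pose proof (Rmin_r (b - y1) (y2 - b)).
    repeat split; lra. }
  assert (Hm : 0 <= m) by (destruct (HB1 x1 ltac:(lra)) as [h _]; pose proof (Cmod_ge_0 (H (x1,y1))); lra).
  set (W := bd (kinv z0) x1 x2 y1 y2).
  assert (HW : 0 < Cmod W) by (apply Cmod_pos_neq; apply winding_nz; lra).
  assert (Hkb : bdcont (kinv z0) x1 x2 y1 y2).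
  { split; intros t Ht; split; apply ccont_kinv; simpl; lra. }
  apply (pow_dominate _ _ (Cmod W) (2 * ((x2 - x1) + (y2 - y1)) * / d)); try lra. apply Cmod_ge_0.
  intros n.
  set (Hn := fun w => Cpow (H w) n).
  assert (hHn : forall x y, x1 <= x <= x2 -> y1 <= y <= y2 -> hol Hn (x,y)).
  { intros x y hx hy. apply hol_pow. apply Hd; assumption. }
  set (qn := fun w => ((Hn w - Hn z0) * kinv z0 w)%C).
  assert (Hq : bd qn x1 x2 y1 y2 = 0%C).
  { apply goursat_exc with (a := a) (b := b); try lra.
    - intros x y hx hy hne. unfold qn. apply hol_mult. apply hol_minus. apply hHn; assumption. apply hol_const.
      apply hol_inv. unfold z0. intros E. injection E. intros. tauto.
    - destruct (hHn a b ltac:(lra) ltac:(lra)) as [l Hl].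
      destruct (derive_approx Hn z0 l Hl (mkposreal 1 Rlt_0_1)) as [del Hdel].
      exists del, (Cmod l + 1). split. apply cond_pos.
      intros x y hx hy hne. unfold qn.
      assert (Hne : ((x,y) - z0)%C <> 0%C).
      { unfold z0. intros E. apply Ceq_minus in E. injection E. intros. tauto. }
      specialize (Hdel (x,y) hx hy). simpl in Hdel.
      rewrite Cmod_mult. unfold kinv. rewrite Cmod_inv by exact Hne.
      assert (Hp : 0 < Cmod ((x,y) - z0)%C) by (apply Cmod_pos_neq; exact Hne).
      assert (E1 : (Hn (x,y) - Hn z0 = (Hn (x,y) - Hn z0 - ((x,y) - z0) * l) + ((x,y) - z0) * l)%C) by ring.
      assert (T : Cmod (Hn (x,y) - Hn z0)%C <= 1 * Cmod ((x,y) - z0)%C + Cmod ((x,y) - z0)%C * Cmod l).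
      { rewrite E1. eapply Rle_trans. apply Cmod_triangle. rewrite Cmod_mult. lra. }
      apply (Rmult_le_reg_r (Cmod ((x,y) - z0)%C)). exact Hp.
      rewrite Rmult_assoc, Rinv_l by lra. nra. }
  assert (Hbq : bd qn x1 x2 y1 y2 = (bd (fun w => Hn w * kinv z0 w)%C x1 x2 y1 y2 + (- Hn z0) * W)%C).
  { assert (Hav : forall f, (forall x y, x1 <= x <= x2 -> y1 <= y <= y2 -> (x <> a \/ y <> b) -> hol f (x,y)) ->
       bdcont f x1 x2 y1 y2).
    { intros f Hf. apply (bdcont_avoid f x1 x2 y1 y2 a b); try lra; assumption. }
    assert (Hki : forall x y, (x <> a \/ y <> b) -> hol (kinv z0) (x,y)).
    { intros x y hne. apply hol_inv. unfold z0. intros E. injection E. intros. tauto. }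
    rewrite (bd_ext qn (fun w => (Hn w * kinv z0 w + (- Hn z0) * kinv z0 w)%C)) by (intros; unfold qn; ring).
    rewrite bd_plus; try lra.
    rewrite bd_mult; try lra. reflexivity.
    - apply Hav. intros; apply Hki; assumption.
    - apply Hav. intros. apply hol_mult. apply hHn; assumption. apply Hki; assumption.
    - apply Hav. intros. apply hol_mult. apply hol_const. apply Hki; assumption. }
  rewrite Hq in Hbq.
  assert (Hmain : bd (fun w => Hn w * kinv z0 w)%C x1 x2 y1 y2 = (Hn z0 * W)%C).
  { apply (f_equal (fun u => (u + Hn z0 * W)%C)) in Hbq.
    replace (bd (fun w => Hn w * kinv z0 w)%C x1 x2 y1 y2) with (bd (fun w => Hn w * kinv z0 w)%C x1 x2 y1 y2 + - Hn z0 * W + Hn z0 * W)%C by ring.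
    simpl in Hbq. rewrite <- Hbq. ring. }
  assert (Hbound : Cmod (bd (fun w => Hn w * kinv z0 w)%C x1 x2 y1 y2) <= 2 * ((x2 - x1) + (y2 - y1)) * (m ^ n * / d)).
  { apply bd_bound; try lra.
    - apply (bdcont_avoid _ x1 x2 y1 y2 a b); try lra. intros x y hx hy hne. apply hol_mult. apply hHn; assumption.
      apply hol_inv. unfold z0. intros E. injection E. intros. tauto.
    - intros x hx. destruct (HB1 x hx) as [u1 u2]. unfold Hn. rewrite !Cmod_mult, !Cmod_pow. split.
      + apply Rmult_le_compat. apply pow_le, Cmod_ge_0. apply Cmod_ge_0.
        apply pow_incr. split. apply Cmod_ge_0. exact u1.
        apply kinv_bound. lra. right. rewrite Rabs_left1 by lra. lra.
      + apply Rmult_le_compat. apply pow_le, Cmod_ge_0. apply Cmod_ge_0.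
        apply pow_incr. split. apply Cmod_ge_0. exact u2.
        apply kinv_bound. lra. right. rewrite Rabs_right by lra. lra.
    - intros y hy. destruct (HB2 y hy) as [u1 u2]. unfold Hn. rewrite !Cmod_mult, !Cmod_pow. split.
      + apply Rmult_le_compat. apply pow_le, Cmod_ge_0. apply Cmod_ge_0.
        apply pow_incr. split. apply Cmod_ge_0. exact u1.
        apply kinv_bound. lra. left. rewrite Rabs_left1 by lra. lra.
      + apply Rmult_le_compat. apply pow_le, Cmod_ge_0. apply Cmod_ge_0.
        apply pow_incr. split. apply Cmod_ge_0. exact u2.
        apply kinv_bound. lra. left. rewrite Rabs_right by lra. lra. }
  rewrite Hmain, Cmod_mult in Hbound. unfold Hn in Hbound. rewrite Cmod_pow in Hbound.
  lra.
Qed.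

Definition inQ x1 x2 y1 y2 (z : C) := x1 <= fst z <= x2 /\ y1 <= snd z <= y2.

Definition wcont (D : C -> Prop) (G : C -> C) (z : C) :=
  filterlim G (within D (@locally C_UniformSpace z)) (@locally C_UniformSpace (G z)).

Lemma wcont_eps D G z (eps : posreal) : wcont D G z ->
  exists del : posreal, forall w, Rabs (fst w - fst z) < del -> Rabs (snd w - snd z) < del -> D w ->
    Cmod (G w - G z)%C < eps.
Proof.
  intros H.
  assert (He : 0 < eps / 4) by (apply Rdiv_lt_0_compat; [apply cond_pos|lra]).
  assert (HP : @locally C_UniformSpace (G z) (fun u => Cmod (u - G z)%C < eps)).
  { apply locally_C_intro. exists (mkposreal _ He). intros u h1 h2. simpl in h1, h2.
    destruct u as [u1 u2]. destruct (G z) as [g1 g2]. simpl in *.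
    eapply Rle_lt_trans. unfold Cminus, Copp, Cplus; simpl. apply Cmod_le_sum.
    replace (u1 + - g1) with (u1 - g1) by ring. replace (u2 + - g2) with (u2 - g2) by ring.
    pose proof (cond_pos eps). lra. }
  specialize (H _ HP). unfold within in H. apply locally_C_elim in H.
  destruct H as [del Hd]. exists del. intros w h1 h2 hD. exact (Hd w h1 h2 hD).
Qed.

Lemma unif_cont G x1 x2 y1 y2 (eps : posreal) :
  (forall z, inQ x1 x2 y1 y2 z -> wcont (inQ x1 x2 y1 y2) G z) ->
  exists d : posreal, forall p p', inQ x1 x2 y1 y2 p -> inQ x1 x2 y1 y2 p' ->
     Rabs (fst p - fst p') < d -> Rabs (snd p - snd p') < d -> Cmod (G p - G p')%C < eps.
Proof.
  intros Hc.
  assert (He : 0 < eps / 2) by (apply Rdiv_lt_0_compat; [apply cond_pos|lra]).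
  assert (Ex : forall u v : R, exists del : posreal,
     inQ x1 x2 y1 y2 (u,v) -> forall w, Rabs (fst w - u) < 2 * del -> Rabs (snd w - v) < 2 * del ->
       inQ x1 x2 y1 y2 w -> Cmod (G w - G (u,v))%C < eps / 2).
  { intros u v. destruct (classic (inQ x1 x2 y1 y2 (u,v))) as [h|h].
    - destruct (wcont_eps _ _ _ (mkposreal _ He) (Hc _ h)) as [del Hd].
      assert (Hd2 : 0 < del / 2) by (apply Rdiv_lt_0_compat; [apply cond_pos|lra]).
      exists (mkposreal _ Hd2). intros _ w h1 h2 h3. simpl in h1, h2. apply Hd; simpl; try lra. exact h3.
    - exists (mkposreal 1 Rlt_0_1). intros h'. contradiction. }
  set (delta := fun u v => proj1_sig (constructive_indefinite_description _ (Ex u v))).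
  assert (Hdelta : forall u v, inQ x1 x2 y1 y2 (u,v) -> forall w, Rabs (fst w - u) < 2 * delta u v ->
     Rabs (snd w - v) < 2 * delta u v -> inQ x1 x2 y1 y2 w -> Cmod (G w - G (u,v))%C < eps / 2).
  { intros u v. unfold delta. destruct (constructive_indefinite_description _ (Ex u v)) as [dl Hdl]. exact Hdl. }
  destruct (compactness_value_2d x1 x2 y1 y2 delta) as [d Hd].
  exists d. intros p p' hp hp' h1 h2.
  destruct p as [px py]. simpl in h1, h2.
  destruct hp as [hpx hpy]. simpl in hpx, hpy.
  specialize (Hd px py hpx hpy).
  apply NNPP. intros Hneg. apply Hd. intros [u [v [hu [hv [k1 [k2 k3]]]]]].
  apply Hneg.
  assert (hq : inQ x1 x2 y1 y2 (u,v)) by (split; simpl; lra).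
  assert (A1 : Cmod (G (px,py) - G (u,v))%C < eps / 2).
  { pose proof (cond_pos (delta u v)). apply Hdelta; [exact hq | simpl; lra | simpl; lra | split; simpl; lra]. }
  assert (A2 : Cmod (G p' - G (u,v))%C < eps / 2).
  { apply Hdelta; try assumption.
    - assert (Rabs (fst p' - u) <= Rabs (fst p' - px) + Rabs (px - u)).
      { replace (fst p' - u) with ((fst p' - px) + (px - u)) by ring. apply Rabs_triang. }
      rewrite Rabs_minus_sym in h1. lra.
    - assert (Rabs (snd p' - v) <= Rabs (snd p' - py) + Rabs (py - v)).
      { replace (snd p' - v) with ((snd p' - py) + (py - v)) by ring. apply Rabs_triang. }
      rewrite Rabs_minus_sym in h2. lra. }
  assert (E : (G (px,py) - G p' = (G (px,py) - G (u,v)) - (G p' - G (u,v)))%C) by ring.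
  rewrite E. eapply Rle_lt_trans. apply Cmod_minus_le. lra.
Qed.

Theorem maxp_rect G x1 x2 y1 y2 m :
  x1 < x2 -> y1 < y2 ->
  (forall z, inQ x1 x2 y1 y2 z -> wcont (inQ x1 x2 y1 y2) G z) ->
  (forall x y, x1 < x < x2 -> y1 < y < y2 -> hol G (x,y)) ->
  (forall x, x1 <= x <= x2 -> Cmod (G (x,y1)) <= m /\ Cmod (G (x,y2)) <= m) ->
  (forall y, y1 <= y <= y2 -> Cmod (G (x1,y)) <= m /\ Cmod (G (x2,y)) <= m) ->
  forall a b, x1 <= a <= x2 -> y1 <= b <= y2 -> Cmod (G (a,b)) <= m.
Proof.
  intros Hx Hy Hc Hd HB1 HB2 a b Ha Hb.
  destruct (Req_dec a x1) as [E|E]; [subst; apply HB2; lra|].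
  destruct (Req_dec a x2) as [E2|E2]; [subst; apply HB2; lra|].
  destruct (Req_dec b y1) as [E3|E3]; [subst; apply HB1; lra|].
  destruct (Req_dec b y2) as [E4|E4]; [subst; apply HB1; lra|].
  assert (Ha' : x1 < a < x2) by lra. assert (Hb' : y1 < b < y2) by lra.
  apply Rnot_lt_le. intros Hlt.
  set (eps := (Cmod (G (a,b)) - m) / 2).
  assert (Heps : 0 < eps) by (unfold eps; lra).
  destruct (unif_cont G x1 x2 y1 y2 (mkposreal _ Heps) Hc) as [d Hud].
  simpl in Hud.
  set (del := Rmin (d / 2) (Rmin (Rmin (a - x1) (x2 - a)) (Rmin (b - y1) (y2 - b)) / 2)).
  assert (Hdel : 0 < del /\ del < d /\ del < a - x1 /\ del < x2 - a /\ del < b - y1 /\ del < y2 - b).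
  { unfold del. pose proof (cond_pos d).
    pose proof (Rmin_l (d / 2) (Rmin (Rmin (a - x1) (x2 - a)) (Rmin (b - y1) (y2 - b)) / 2)).
    pose proof (Rmin_r (d / 2) (Rmin (Rmin (a - x1) (x2 - a)) (Rmin (b - y1) (y2 - b)) / 2)).
    pose proof (Rmin_l (Rmin (a - x1) (x2 - a)) (Rmin (b - y1) (y2 - b))).
    pose proof (Rmin_r (Rmin (a - x1) (x2 - a)) (Rmin (b - y1) (y2 - b))).
    pose proof (Rmin_l (a - x1) (x2 - a)). pose proof (Rmin_r (a - x1) (x2 - a)).
    pose proof (Rmin_l (b - y1) (y2 - b)). pose proof (Rmin_r (b - y1) (y2 - b)).
    assert (0 < Rmin (Rmin (a - x1) (x2 - a)) (Rmin (b - y1) (y2 - b))) by (repeat apply Rmin_pos; lra).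
    assert (0 < Rmin (d / 2) (Rmin (Rmin (a - x1) (x2 - a)) (Rmin (b - y1) (y2 - b)) / 2)) by (apply Rmin_pos; lra).
    repeat split; lra. }
  destruct Hdel as (d0 & d1 & d2 & d3 & d4 & d5).
  assert (Hnear : forall p q : C, inQ x1 x2 y1 y2 p -> inQ x1 x2 y1 y2 q ->
    Rabs (fst p - fst q) <= del -> Rabs (snd p - snd q) <= del -> Cmod (G q) <= m -> Cmod (G p) <= m + eps).
  { intros p q hp hq h1 h2 hm.
    assert (Cmod (G p - G q)%C < eps) by (apply Hud; auto; lra).
    assert (E5 : G p = ((G p - G q) + G q)%C) by ring.
    rewrite E5. eapply Rle_trans. apply Cmod_triangle. lra. }
  assert (Hfin : Cmod (G (a,b)) <= m + eps).
  { apply (maxp_inner G (x1 + del) (x2 - del) (y1 + del) (y2 - del)); try lra.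
    - intros x y hx hy. apply Hd; lra.
    - intros x hx. split.
      + apply (Hnear (x, y1 + del) (x, y1)); try (split; simpl; lra); simpl.
        rewrite Rminus_eq_0, Rabs_R0; lra. rewrite Rabs_right; lra. apply HB1; lra.
      + apply (Hnear (x, y2 - del) (x, y2)); try (split; simpl; lra); simpl.
        rewrite Rminus_eq_0, Rabs_R0; lra. rewrite Rabs_left1; lra. apply HB1; lra.
    - intros y hy. split.
      + apply (Hnear (x1 + del, y) (x1, y)); try (split; simpl; lra); simpl.
        rewrite Rabs_right; lra. rewrite Rminus_eq_0, Rabs_R0; lra. apply HB2; lra.
      + apply (Hnear (x2 - del, y) (x2, y)); try (split; simpl; lra); simpl.
        rewrite Rabs_left1; lra. rewrite Rminus_eq_0, Rabs_R0; lra. apply HB2; lra. }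
  unfold eps in Hfin. lra.
Qed.

Lemma Rabs_le_inv a b : Rabs a <= b -> - b <= a <= b.
Proof. intros H. pose proof (Rabs_maj2 a). pose proof (Rle_abs a). lra. Qed.

Lemma exp_b1 p : Rabs p <= 1/2 -> 0 <= exp p - 1 - p <= 2 * (p * p).
Proof.
  intros Hp. pose proof (exp_ineq1_le p). pose proof (exp_ineq1_le (- p)).
  split. lra.
  assert (Hpos : 0 < 1 - p) by (apply Rabs_le_inv in Hp; lra).
  assert (E : exp p = / exp (- p)) by (rewrite exp_Ropp, Rinv_inv; reflexivity).
  assert (Hle : exp p <= / (1 - p)).
  { rewrite E. apply Rinv_le_contravar. lra. lra. }
  assert (/ (1 - p) <= 1 + p + 2 * (p * p)).
  { apply Rabs_le_inv in Hp.
    apply (Rmult_le_reg_l (1 - p)). lra. rewrite Rinv_r by lra.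
    destruct (Rle_dec 0 p); nra. }
  lra.
Qed.

Lemma exp_b2 p : Rabs p <= 1/2 -> Rabs (exp p - 1) <= 2 * Rabs p.
Proof.
  intros Hp. pose proof (exp_b1 p Hp). apply Rabs_le_inv in Hp as Hp'.
  apply Rabs_le. destruct (Rle_dec 0 p).
  - rewrite Rabs_right by lra. split; nra.
  - rewrite Rabs_left by lra. split; nra.
Qed.

Lemma sin_b_pos q : 0 <= q <= 1/2 -> q - q * q * q / 6 <= sin q <= q.
Proof.
  intros Hq. destruct (pre_sin_bound q 0 ltac:(lra) ltac:(lra)) as [h1 h2].
  unfold sin_approx, sin_term in h1, h2. simpl in h1, h2.
  split. replace (q - q * q * q / 6) with (1 * (q * 1 / 1) + -1 * 1 * (q * (q * (q * 1)) / (1 + 1 + 1 + 1 + 1 + 1))) by field. exact h1.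
  eapply Rle_trans. exact h2.
  assert (0 <= q * q * q) by (apply Rmult_le_pos; [nra|lra]).
  assert (q * q * q * q * q <= 20 * (q * q * q)) by (assert (q*q <= 1) by nra; nra).
  field_simplify. lra.
Qed.

Lemma sin_b q : Rabs q <= 1/2 -> Rabs (sin q) <= Rabs q /\ Rabs (sin q - q) <= q * q.
Proof.
  intros Hq. apply Rabs_le_inv in Hq.
  destruct (Rle_dec 0 q).
  - destruct (sin_b_pos q ltac:(lra)). assert (0 <= q * q * q) by (apply Rmult_le_pos; [nra|lra]).
    split; apply Rabs_le; rewrite ?Rabs_right by lra; split; nra.
  - destruct (sin_b_pos (- q) ltac:(lra)). rewrite sin_neg in *.
    assert (0 <= (-q) * (-q) * (-q)) by (apply Rmult_le_pos; [nra|lra]).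
    split; apply Rabs_le; rewrite ?Rabs_left by lra; split; nra.
Qed.

Lemma cos_b q : Rabs q <= 1/2 -> - (q * q / 2) <= cos q - 1 <= 0.
Proof.
  intros Hq. apply Rabs_le_inv in Hq.
  destruct (pre_cos_bound q 0 ltac:(lra) ltac:(lra)) as [h1 h2].
  unfold cos_approx, cos_term in h1, h2. simpl in h1, h2.
  split.
  - replace (- (q * q / 2)) with (1 * (1 / 1) + -1 * 1 * (q * (q * 1) / (1 + 1)) - 1) by field. lra.
  - assert (q * q <= 1) by nra.
    assert (Ex : 1 * (1 / 1) + -1 * 1 * (q * (q * 1) / (1 + 1)) + 1 * (-1 * 1) * (-1 * 1) * (q * (q * (q * (q * 1))) / (1 + 1 + 1 + 1 + 1 + 1 + 1 + 1 + 1 + 1 + 1 + 1 + 1 + 1 + 1 + 1 + 1 + 1 + 1 + 1 + 1 + 1 + 1 + 1)) <= 1).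
    { field_simplify. nra. }
    lra.
Qed.

Definition cexp (w : C) : C := (exp (fst w) * cos (snd w), exp (fst w) * sin (snd w)).

Lemma Cmod_cexp w : Cmod (cexp w) = exp (fst w).
Proof.
  unfold Cmod, cexp; simpl.
  replace (exp (fst w) * cos (snd w) * (exp (fst w) * cos (snd w) * 1) +
           exp (fst w) * sin (snd w) * (exp (fst w) * sin (snd w) * 1))
    with (exp (fst w) * exp (fst w) * (Rsqr (sin (snd w)) + Rsqr (cos (snd w)))) by (unfold Rsqr; ring).
  rewrite sin2_cos2, Rmult_1_r. rewrite sqrt_square. reflexivity. left; apply exp_pos.
Qed.

Lemma cexp_plus w h : cexp (w + h)%C = (cexp w * cexp h)%C.
Proof.
  unfold cexp, Cplus, Cmult; simpl. rewrite exp_plus, cos_plus, sin_plus. f_equal; ring.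
Qed.

Lemma cexp_quad p q : Rabs p <= 1/2 -> Rabs q <= 1/2 ->
  Cmod (cexp (p,q) - 1 - (p,q))%C <= 3 * (p * p + q * q).
Proof.
  intros Hp Hq.
  destruct (exp_b1 p Hp) as [e1 e2]. pose proof (exp_b2 p Hp) as e3.
  destruct (sin_b q Hq) as [s1 s2]. destruct (cos_b q Hq) as [c1 c2].
  pose proof (COS_bound q) as cb. pose proof (exp_pos p).
  unfold cexp, Cminus, Cplus, Copp, RtoC; simpl.
  eapply Rle_trans. apply Cmod_le_sum.
  set (E := exp p - 1 - p). set (S := sin q - q). set (Cc := cos q - 1).
  assert (A1 : exp p * cos q + - (1) + - p = E * cos q + (1 + p) * Cc) by (unfold E, Cc; ring).
  assert (A2 : exp p * sin q + - 0 + - q = (exp p - 1) * sin q + S) by (unfold S; ring).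
  rewrite A1, A2.
  assert (B1 : Rabs (E * cos q + (1 + p) * Cc) <= 2 * (p * p) + q * q).
  { eapply Rle_trans. apply Rabs_triang. rewrite !Rabs_mult.
    assert (Rabs (cos q) <= 1) by (apply Rabs_le; lra).
    assert (Rabs E <= 2 * (p * p)) by (apply Rabs_le; fold E in e1, e2; lra).
    assert (Rabs (1 + p) <= 3/2) by (apply Rabs_le; apply Rabs_le_inv in Hp; lra).
    assert (Rabs Cc <= q * q / 2) by (apply Rabs_le; fold Cc in c1, c2; lra).
    pose proof (Rabs_pos E). pose proof (Rabs_pos (cos q)). pose proof (Rabs_pos (1+p)). pose proof (Rabs_pos Cc).
    nra. }
  assert (B2 : Rabs ((exp p - 1) * sin q + S) <= p * p + 2 * (q * q)).
  { eapply Rle_trans. apply Rabs_triang. rewrite Rabs_mult.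
    pose proof (Rabs_pos (exp p - 1)). pose proof (Rabs_pos (sin q)). pose proof (Rabs_pos p). pose proof (Rabs_pos q).
    assert (Rabs (exp p - 1) * Rabs (sin q) <= 2 * Rabs p * Rabs q) by (apply Rmult_le_compat; auto).
    assert (2 * Rabs p * Rabs q <= p * p + q * q).
    { assert (Rabs p * Rabs p = p * p) by (rewrite <- Rabs_mult; apply Rabs_right; nra).
      assert (Rabs q * Rabs q = q * q) by (rewrite <- Rabs_mult; apply Rabs_right; nra).
      pose proof (Rle_0_sqr (Rabs p - Rabs q)). unfold Rsqr in *. nra. }
    fold S in s2. lra. }
  lra.
Qed.

Lemma hol_cexp w : hol cexp w.
Proof.
  exists (cexp w).
  apply (is_derive_quad _ _ _ (3 * exp (fst w)) (1/2)). lra.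
  intros v Hv.
  set (h := (v - w)%C).
  assert (Ev : v = (w + h)%C) by (unfold h; ring).
  rewrite Ev, cexp_plus.
  replace (cexp w * cexp h - cexp w - h * cexp w)%C with (cexp w * (cexp h - 1 - h))%C by ring.
  rewrite Cmod_mult, Cmod_cexp. fold h in Hv |- *.
  destruct h as [p q].
  assert (Hp : Rabs p <= 1/2) by (pose proof (Cmod_fst_le (p,q)); simpl in *; lra).
  assert (Hq : Rabs q <= 1/2) by (pose proof (Cmod_snd_le (p,q)); simpl in *; lra).
  assert (Eh : Cmod (p,q) * Cmod (p,q) = p * p + q * q).
  { unfold Cmod; simpl. rewrite sqrt_sqrt by nra. ring. }
  rewrite Eh. pose proof (exp_pos (fst w)).
  pose proof (cexp_quad p q Hp Hq). nra.
Qed.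

Lemma hol_comp f g z : hol f (g z) -> hol g z -> hol (fun w => f (g w)) z.
Proof.
  intros [l1 H1] [l2 H2]. eexists.
  apply (@is_derive_comp C_AbsRing C_NormedModule f g z l1 l2 H1 (conv1 _ _ _ H2)).
Qed.

Lemma wcont_intro D G z :
  (forall eps : posreal, exists del : posreal, forall w, Rabs (fst w - fst z) < del -> Rabs (snd w - snd z) < del -> D w ->
    Cmod (G w - G z)%C < eps) -> wcont D G z.
Proof.
  intros H P HP. apply locally_C_elim in HP. destruct HP as [eps Heps].
  destruct (H eps) as [del Hd]. unfold filtermap, within.
  apply locally_C_intro. exists del. intros w h1 h2 hD.
  specialize (Hd w h1 h2 hD).
  apply Heps.
  - pose proof (Cmod_fst_le (G w - G z)%C). destruct (G w), (G z). simpl in *. 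
    replace (r - r1) with (r + - r1) by ring. lra.
  - pose proof (Cmod_snd_le (G w - G z)%C). destruct (G w), (G z). simpl in *.
    replace (r0 - r2) with (r0 + - r2) by ring. lra.
Qed.

Lemma wcont_sub (D D' : C -> Prop) G z : (forall w, D w -> D' w) -> wcont D' G z -> wcont D G z.
Proof.
  intros Hs H P HP. specialize (H P HP). unfold filtermap, within in *.
  eapply filter_imp; [|exact H]. intros w Hw hD. apply Hw, Hs, hD.
Qed.

Lemma ccont_wcont D G z : ccont G z -> wcont D G z.
Proof.
  intros H P HP. specialize (H P HP). unfold filtermap, within in *.
  eapply filter_imp; [|exact H]. intros w Hw _. exact Hw.
Qed.

Lemma wcont_mult D G1 G2 z : wcont D G1 z -> wcont D G2 z -> wcont D (fun w => G1 w * G2 w)%C z.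
Proof.
  intros H1 H2. apply wcont_intro. intros eps.
  set (a := Cmod (G1 z)). set (b := Cmod (G2 z)).
  set (e := Rmin 1 (eps / (a + b + 2))).
  assert (He : 0 < e) by (unfold e; apply Rmin_pos; [lra| apply Rdiv_lt_0_compat; [apply cond_pos| unfold a, b; pose proof (Cmod_ge_0 (G1 z)); pose proof (Cmod_ge_0 (G2 z)); lra]]).
  destruct (wcont_eps D G1 z (mkposreal e He) H1) as [d1 k1].
  destruct (wcont_eps D G2 z (mkposreal e He) H2) as [d2 k2].
  assert (Hd : 0 < Rmin d1 d2) by (apply Rmin_pos; apply cond_pos).
  exists (mkposreal _ Hd). intros w h1 h2 hD. simpl in h1, h2.
  pose proof (Rmin_l d1 d2). pose proof (Rmin_r d1 d2).
  specialize (k1 w ltac:(lra) ltac:(lra) hD). specialize (k2 w ltac:(lra) ltac:(lra) hD). simpl in k1, k2.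
  assert (E : (G1 w * G2 w - G1 z * G2 z = (G1 w - G1 z) * (G2 w - G2 z) + (G1 w - G1 z) * G2 z + G1 z * (G2 w - G2 z))%C) by ring.
  rewrite E.
  eapply Rle_lt_trans. apply Cmod_triangle.
  eapply Rle_lt_trans. apply Rplus_le_compat_r. apply Cmod_triangle.
  rewrite !Cmod_mult. fold a b.
  pose proof (Cmod_ge_0 (G1 w - G1 z)%C). pose proof (Cmod_ge_0 (G2 w - G2 z)%C).
  assert (ha : 0 <= a) by apply Cmod_ge_0. assert (hb : 0 <= b) by apply Cmod_ge_0.
  assert (e1 : e <= 1) by apply Rmin_l. assert (e2 : e <= eps / (a + b + 2)) by apply Rmin_r.
  assert (e3 : e * (a + b + 2) <= eps).
  { apply (Rmult_le_compat_r (a + b + 2)) in e2; [|lra]. unfold Rdiv in e2. rewrite Rmult_assoc, Rinv_l in e2 by lra. lra. }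
  assert (Cmod (G1 w - G1 z)%C * Cmod (G2 w - G2 z)%C <= e * e) by (apply Rmult_le_compat; lra).
  assert (Cmod (G1 w - G1 z)%C * b <= e * b) by (apply Rmult_le_compat_r; lra).
  assert (a * Cmod (G2 w - G2 z)%C <= a * e) by (apply Rmult_le_compat_l; lra).
  assert (e * e < e * 2) by nra.
  nra.
Qed.

Lemma exp_mono x y : x <= y -> exp x <= exp y.
Proof. intros [H|H]. left; apply exp_increasing; exact H. subst; lra. Qed.

Lemma lim_eps a A Z : 0 <= Z -> 0 < A -> (forall eps, 0 < eps -> a <= A * exp (eps * Z)) -> a <= A.
Proof.
  intros HZ HA H. apply Rnot_lt_le. intros Hlt.
  set (l := ln (a / A)).
  assert (Hl : 0 < l).
  { unfold l. rewrite <- ln_1. apply ln_increasing. lra.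
    apply (Rmult_lt_reg_r A). exact HA. unfold Rdiv. rewrite Rmult_assoc, Rinv_l by lra. lra. }
  set (eps := l / (2 * (Z + 1))).
  assert (He : 0 < eps) by (unfold eps; apply Rdiv_lt_0_compat; lra).
  specialize (H eps He).
  assert (H2 : eps * Z < l).
  { unfold eps. apply (Rmult_lt_reg_r (2 * (Z + 1))). lra.
    replace (l / (2 * (Z + 1)) * Z * (2 * (Z + 1))) with (l * Z) by (field; lra). nra. }
  apply exp_increasing in H2. unfold l in H2. rewrite exp_ln in H2.
  2: { apply Rdiv_lt_0_compat; lra. }
  assert (A * exp (eps * Z) < a).
  { apply (Rmult_lt_compat_l A) in H2; [|lra]. replace (A * (a / A)) with a in H2 by (field; lra). lra. }
  lra.
Qed.

Lemma cexp_arg x y : has_arg (cexp (x,y)) y.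
Proof. unfold has_arg. rewrite Cmod_cexp. reflexivity. Qed.

Lemma cexp_nz w : cexp w <> 0%C.
Proof. intros E. pose proof (Cmod_cexp w). rewrite E, Cmod_0 in H. pose proof (exp_pos (fst w)). lra. Qed.

Definition Qf (Kl L lam be Dd eps : R) (w : C) : C :=
  (RtoC (- Kl) - RtoC (L / Dd) * (RtoC be + Ci * w) + RtoC (lam / Dd) * (RtoC be * w + Ci * w * w * RtoC (/ 2)) - RtoC eps * w * w)%C.

Lemma Qf_re Kl L lam be Dd eps x y : Dd <> 0 ->
  fst (Qf Kl L lam be Dd eps (x,y)) = - ((be - y) / Dd * (L - lam * x) + Kl) - eps * (x * x - y * y).
Proof. intros HD. unfold Qf, RtoC, Ci, Cminus, Cplus, Cmult, Copp; simpl. field. exact HD. Qed.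

Lemma hol_Qf Kl L lam be Dd eps w : hol (Qf Kl L lam be Dd eps) w.
Proof.
  unfold Qf.
  apply hol_minus. apply hol_plus. apply hol_minus. apply hol_const.
  apply hol_mult. apply hol_const. apply hol_plus. apply hol_const. apply hol_mult. apply hol_const. apply hol_id.
  apply hol_mult. apply hol_const. apply hol_plus. apply hol_mult. apply hol_const. apply hol_id.
  apply hol_mult. apply hol_mult. apply hol_mult. apply hol_const. apply hol_id. apply hol_id. apply hol_const.
  apply hol_mult. apply hol_mult. apply hol_const. apply hol_id. apply hol_id.
Qed.

Lemma sq_between a b y : a <= y <= b -> y * y <= a * a + b * b.
Proof. intros H. destruct (Rle_dec 0 y); nra. Qed.

Lemma lin_bound t L lam x X : 0 <= t <= 1 -> 0 < lam -> Rabs x <= X -> - (t * (L - lam * x)) <= Rabs L + lam * X.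
Proof.
  intros Ht Hl Hx. pose proof (Rabs_maj2 L). pose proof (Rle_abs L). pose proof (Rabs_pos x). apply Rabs_le_inv in Hx.
  pose proof (Rabs_pos L).
  assert (h1 : t * (- L) <= t * Rabs L) by (apply Rmult_le_compat_l; lra).
  assert (h2 : t * Rabs L <= 1 * Rabs L) by (apply Rmult_le_compat_r; lra).
  assert (h3 : (t * lam) * x <= (t * lam) * X) by (apply Rmult_le_compat_l; nra).
  assert (h4 : (t * lam) * X <= 1 * lam * X) by (apply Rmult_le_compat_r; nra).
  nra.
Qed.

Lemma X_bound lM L lam eps x0 : 0 < eps -> 0 < lam ->
  let X := (Rabs lM + Rabs L + lam + 1) / eps + Rabs x0 + 1 in
  1 <= X /\ Rabs x0 < X /\ lM + Rabs L + lam * X <= eps * (X * X).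
Proof.
  intros He Hl X. pose proof (Rabs_pos lM). pose proof (Rabs_pos L). pose proof (Rabs_pos x0).
  pose proof (Rle_abs lM).
  assert (Hq0 : 0 <= (Rabs lM + Rabs L + lam + 1) / eps) by (apply Rdiv_le_0_compat; lra).
  assert (HX1 : 1 <= X) by (unfold X; lra).
  assert (HeX : Rabs lM + Rabs L + lam + 1 <= eps * X).
  { unfold X. rewrite Rmult_plus_distr_l, Rmult_plus_distr_l.
    replace (eps * ((Rabs lM + Rabs L + lam + 1) / eps)) with (Rabs lM + Rabs L + lam + 1) by (field; lra).
    nra. }
  split. exact HX1. split. unfold X; lra. nra.
Qed.

Theorem lemma5p1 (alpha beta : R) (f : C -> C) (M Cc lambda : R) :
  alpha < beta ->
  (forall z, sector alpha beta z -> holo_at f z) ->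
  (forall z, sector_closure alpha beta z ->
     cont_on_at (sector_closure alpha beta) f z) ->
  0 < M -> 0 < Cc -> 0 < lambda ->
  (forall z, sector alpha beta z -> Cmod (f z) <= M) ->
  (forall z : C, z <> 0%C -> has_arg z alpha ->
     Cmod (f z) <= Cc / Rpower (Cmod z) lambda) ->
  forall (z : C) (theta : R), z <> 0%C -> alpha <= theta <= beta ->
    has_arg z theta ->
    Cmod (f z) <= Rmax 1 M *
      Rpower (Cc / Rpower (Cmod z) lambda) ((beta - theta) / (beta - alpha)).
Proof.
  intros Hab Hhol Hcont HM HC Hlam Hbd Hray z theta Hz Hth Harg.
  set (g := fun w => f (cexp w)).
  set (strip := fun w : C => alpha <= snd w <= beta).
  assert (g_hol : forall x y, alpha < y < beta -> hol g (x,y)).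
  { intros x y hy. unfold g. apply hol_comp. apply Hhol. split. apply cexp_nz.
    exists y. split. lra. apply cexp_arg. apply hol_cexp. }
  assert (g_cont : forall w, strip w -> wcont strip g w).
  { intros [x y] hw. unfold strip in hw; simpl in hw.
    assert (Hsc : sector_closure alpha beta (cexp (x,y))) by (right; exists y; split; [lra| apply cexp_arg]).
    pose proof (Hcont _ Hsc) as Hc. unfold cont_on_at in Hc.
    unfold wcont, g.
    eapply filterlim_comp; [|exact Hc].
    intros P HP. unfold within in HP.
    pose proof (ex_derive_ccont cexp (x,y) (hol_cexp (x,y))) as Hce.
    specialize (Hce _ HP). unfold filtermap, within in *.
    eapply filter_imp; [|exact Hce]. intros [u v] Hu Hs. apply Hu.
    right. exists v. split. unfold strip in Hs; simpl in Hs; lra. apply cexp_arg. }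
  assert (g_M : forall x y, alpha <= y <= beta -> Cmod (g (x,y)) <= M).
  { intros x y hy.
    assert (Hint : forall y', alpha < y' < beta -> Cmod (g (x,y')) <= M).
    { intros y' hy'. unfold g. apply Hbd. split. apply cexp_nz. exists y'. split. lra. apply cexp_arg. }
    assert (Happ : forall d, 0 < d -> exists y', alpha < y' < beta /\ Rabs (y' - y) < d).
    { intros d hd. set (s := Rmin (d / 2) ((beta - alpha) / 2)).
      assert (Hs : 0 < s /\ s < d /\ s < beta - alpha) by
        (unfold s; pose proof (Rmin_l (d/2) ((beta - alpha)/2));
         pose proof (Rmin_r (d/2) ((beta - alpha)/2));
         assert (0 < Rmin (d / 2) ((beta - alpha) / 2)) by (apply Rmin_pos; lra); lra).
      destruct (Rlt_dec y beta) as [h|h].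
      - destruct (Rlt_dec alpha y) as [h'|h'].
        + exists y. split. lra. rewrite Rminus_eq_0, Rabs_R0. lra.
        + exists (y + s). split. lra. rewrite Rabs_right by lra. lra.
      - exists (y - s). split. lra. rewrite Rabs_left1 by lra. lra. }
    apply Rnot_lt_le; intros Hlt.
    set (eps := (Cmod (g (x,y)) - M) / 2); assert (Heps : 0 < eps) by (unfold eps; lra).
    destruct (wcont_eps strip g (x,y) (mkposreal _ Heps) (g_cont (x,y) ltac:(unfold strip; simpl; lra))) as [del Hd].
    simpl in Hd.
    destruct (Happ del (cond_pos del)) as [y' [hy1 hy2]].
    specialize (Hd (x, y') ltac:(simpl; rewrite Rminus_eq_0, Rabs_R0; apply cond_pos) ltac:(simpl; lra)
        ltac:(unfold strip; simpl; lra)).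
    pose proof (Hint y' hy1).
    assert (E : g (x,y) = (g (x, y') - (g (x, y') - g (x,y)))%C) by ring.
    pose proof (Cmod_minus_le (g (x, y')) (g (x, y') - g (x,y))%C) as T. rewrite <- E in T.
    unfold eps in Hd. lra. }
  assert (g_ray : forall x, Cmod (g (x,alpha)) <= exp (ln Cc - lambda * x)).
  { intros x. unfold g. eapply Rle_trans. apply Hray. apply cexp_nz. apply cexp_arg.
    rewrite Cmod_cexp. simpl. unfold Rpower. rewrite ln_exp.
    rewrite Rminus_def, exp_plus, exp_ln by lra. rewrite exp_Ropp. right. reflexivity. }
  set (x0 := ln (Cmod z)).
  assert (Hzpos : 0 < Cmod z) by (apply Cmod_pos_neq; exact Hz).
  assert (Ez : cexp (x0, theta) = z).
  { unfold cexp; simpl. unfold x0. rewrite exp_ln by exact Hzpos. rewrite Harg at 3. reflexivity. }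
  set (K := Rmax 1 M). assert (HK1 : 1 <= K) by apply Rmax_l. assert (HKM : M <= K) by apply Rmax_r.
  set (Kl := ln K). assert (HKl : 0 <= Kl) by (unfold Kl; rewrite <- ln_1; destruct HK1 as [h|h]; [left; apply ln_increasing; lra| rewrite h; lra]).
  assert (EK : exp Kl = K) by (unfold Kl; apply exp_ln; lra).
  set (L := ln Cc). assert (EL : exp L = Cc) by (unfold L; apply exp_ln; lra).
  set (Dd := beta - alpha). assert (HD : 0 < Dd) by (unfold Dd; lra).
  set (t0 := (beta - theta) / Dd).
  set (A := exp (t0 * (L - lambda * x0) + Kl)).
  assert (Goal_eq : K * Rpower (Cc / Rpower (Cmod z) lambda) t0 = A).
  { unfold A, Rpower. rewrite <- EK. rewrite <- exp_plus.
    fold x0. rewrite <- EL at 1. unfold Rdiv. rewrite <- exp_Ropp, <- exp_plus, ln_exp. f_equal. ring. }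
  change ((beta - theta) / (beta - alpha)) with t0. rewrite Goal_eq.
  rewrite <- Ez. fold (g (x0,theta)).
  set (Y2 := alpha * alpha + beta * beta).
  apply (lim_eps _ A (Y2 + x0 * x0)).
  { unfold Y2. nra. } { unfold A. apply exp_pos. }
  intros eps Heps.
  destruct (X_bound (ln M) L lambda eps x0 Heps Hlam) as (HX1 & HX2 & HX3).
  set (X := (Rabs (ln M) + Rabs L + lambda + 1) / eps + Rabs x0 + 1) in *.
  set (Ge := fun w => (g w * cexp (Qf Kl L lambda beta Dd eps w))%C).
  assert (Hmod : forall x y, Cmod (Ge (x,y)) = Cmod (g (x,y)) * exp (- ((beta - y) / Dd * (L - lambda * x) + Kl) - eps * (x * x - y * y))).
  { intros x y. unfold Ge. rewrite Cmod_mult, Cmod_cexp, Qf_re by lra. reflexivity. }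
  assert (Hmain : Cmod (Ge (x0,theta)) <= exp (eps * Y2)).
  { apply (maxp_rect Ge (- X) X alpha beta); try lra.
    - intros w hw. unfold Ge. apply wcont_mult.
      + apply (wcont_sub _ strip). intros u hu; unfold inQ, strip in *; tauto.
        apply g_cont. unfold inQ in hw; unfold strip; tauto.
      + apply ccont_wcont. apply ex_derive_ccont. apply (hol_comp cexp). apply hol_cexp. apply hol_Qf.
    - intros x y hx hy. unfold Ge. apply hol_mult. apply g_hol; lra.
      apply (hol_comp cexp). apply hol_cexp. apply hol_Qf.
    - intros x hx. rewrite !Hmod. split.
      + replace ((beta - alpha) / Dd) with 1 by (unfold Dd; field; lra).
        eapply Rle_trans. apply Rmult_le_compat_r. left; apply exp_pos. apply g_ray.
        rewrite <- exp_plus. apply exp_mono. unfold Y2. fold L. assert (0 <= eps * (x * x)) by (apply Rmult_le_pos; nra). assert (0 <= eps * (beta * beta)) by (apply Rmult_le_pos; nra). nra.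
      + replace ((beta - beta) / Dd) with 0 by (unfold Dd; field; lra).
        eapply Rle_trans. apply Rmult_le_compat_r. left; apply exp_pos. apply (g_M x beta). lra.
        eapply Rle_trans. apply Rmult_le_compat_r. left; apply exp_pos. apply HKM.
        rewrite <- EK, <- exp_plus. apply exp_mono. unfold Y2. nra.
    - intros y hy. rewrite !Hmod.
      assert (Ht : 0 <= (beta - y) / Dd <= 1).
      { unfold Dd. split. apply Rdiv_le_0_compat; lra.
        apply (Rmult_le_reg_r (beta - alpha)). lra. unfold Rdiv. rewrite Rmult_assoc, Rinv_l by lra. lra. }
      assert (Hy2 : y * y <= Y2) by (unfold Y2; apply sq_between; lra).
      assert (Hside : forall x, Rabs x <= X -> x * x = X * X ->
         Cmod (g (x,y)) * exp (- ((beta - y) / Dd * (L - lambda * x) + Kl) - eps * (x * x - y * y)) <= exp (eps * Y2)).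
      { intros x hx hxx.
        eapply Rle_trans. apply Rmult_le_compat_r. left; apply exp_pos. apply (g_M x y). lra.
        rewrite <- (exp_ln M) at 1 by lra. rewrite <- exp_plus. apply exp_mono.
        pose proof (lin_bound ((beta - y) / Dd) L lambda x X Ht Hlam hx).
        rewrite hxx. nra. }
      split; apply Hside.
      + rewrite Rabs_Ropp, Rabs_right; lra.
      + ring.
      + rewrite Rabs_right; lra.
      + ring.
    - pose proof (Rabs_le_inv x0 X ltac:(lra)). lra.
    }
  rewrite Hmod in Hmain.
  set (R0 := - ((beta - theta) / Dd * (L - lambda * x0) + Kl) - eps * (x0 * x0 - theta * theta)) in Hmain.
  assert (Hg : Cmod (g (x0,theta)) <= exp (eps * Y2) * exp (- R0)).
  { apply (Rmult_le_reg_r (exp R0)). apply exp_pos.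
    rewrite Rmult_assoc, <- exp_plus, Rplus_opp_l, exp_0, Rmult_1_r. exact Hmain. }
  eapply Rle_trans. exact Hg.
  rewrite <- exp_plus. unfold A. rewrite <- exp_plus. apply exp_mono.
  unfold R0, t0. nra.
Qed.
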